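(* For every integer $n\ge 5$ there exists a smooth complete toric threefold of Picard number $n$ all of whose nef line bundles are trivial.
   Context: A line bundle $L$ on a complete variety $X$ is nef if $\deg(L|_C)\ge0$ for every curve $C\subset X$; trivial means $L\cong\mathcal{O}_X$. The Picard number is the rank of the Picard group. *)

(* Defs.v *)
(* Smooth complete toric threefolds are encoded by their fans
   (the standard toric dictionary). *)
From HB Require Import structures.
From mathcomp Require Import all_boot all_order all_algebra.
Set Implicit Arguments. Unset Strict Implicit. Unset Printing Implicit Defensive.
Import Order.TTheory GRing.Theory Num.Theory.
Local Open Scope ring_scope.

(* A fan in N_R = R^3 with N rays; ray t has primitive generator v t : Z^3. *)
Definition vecQ (N : nat) (v : 'I_N -> 'I_3 -> int) (t : 'I_N) : 'cV[rat]_3 :=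
  \col_r ((v t r)%:~R).

Definition tri (N : nat) (i j k : 'I_N) (s : 'I_3) : 'I_N :=
  match val s with 0 => i | 1 => j | _ => k end.
Definition mx3 (N : nat) (v : 'I_N -> 'I_3 -> int) (i j k : 'I_N) : 'M[int]_3 :=
  \matrix_(r < 3, s < 3) v (tri i j k s) r.

Definition in_cone (N : nat) (v : 'I_N -> 'I_3 -> int) (S : {set 'I_N})
    (x : 'cV[rat]_3) : Prop :=
  exists lam : 'I_N -> rat,
    (forall t, 0 <= lam t) /\ (forall t, t \notin S -> lam t = 0) /\
    x = \sum_t lam t *: vecQ v t.

(* C = the set of maximal (3-dimensional) cones, each given by its rays. *)
Definition smooth_complete_fan (N : nat) (v : 'I_N -> 'I_3 -> int)
    (C : {set {set 'I_N}}) : Prop :=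
  [/\ injective v,
      (* smooth: every maximal cone is generated by a Z-basis of Z^3 *)
      (forall c, c \in C -> exists i j k : 'I_N,
          c = [set i; j; k] /\ (\det (mx3 v i j k) = 1 \/ \det (mx3 v i j k) = -1)),
      (forall t, exists c, c \in C /\ t \in c),
      (* fan: two cones meet along a common face *)
      (forall c c', c \in C -> c' \in C -> forall x,
          in_cone v c x -> in_cone v c' x -> in_cone v (c :&: c') x)
    &
      (forall x, exists c, c \in C /\ in_cone v c x)].

(* Picard number = rank of Pic(X) = rank of Z^N / M (M = Z^3 via m |-> (<m,v_t>)_t) *)
Definition rayMatrix (N : nat) (v : 'I_N -> 'I_3 -> int) : 'M[rat]_(3, N) :=
  \matrix_(r < 3, t < N) ((v t r)%:~R).
Definition picard_number (N : nat) (v : 'I_N -> 'I_3 -> int) : nat :=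
  (N - \rank (rayMatrix v))%N.

(* A line bundle is represented by a T-invariant divisor  sum_t a t D_t.
   Its degree on the invariant curve V(tau), tau = cone(v_i,v_j) = sigma /\ sigma',
   sigma = cone(v_i,v_j,v_k), sigma' = cone(v_i,v_j,v_l), is
   a_k + a_l + alpha a_i + beta a_j  where v_k + v_l + alpha v_i + beta v_j = 0. *)
Definition nef (N : nat) (v : 'I_N -> 'I_3 -> int) (C : {set {set 'I_N}})
    (a : 'I_N -> int) : Prop :=
  forall c c', c \in C -> c' \in C ->
  forall i j k l : 'I_N,
    i \in c -> i \in c' -> j \in c -> j \in c' -> i != j ->
    k \in c -> k \notin c' -> l \in c' -> l \notin c ->
  forall alpha beta : rat,
    vecQ v k + vecQ v l + alpha *: vecQ v i + beta *: vecQ v j = 0 ->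
    0 <= (a k)%:~R + (a l)%:~R + alpha * (a i)%:~R + beta * (a j)%:~R.

(* O(D) is trivial iff D is principal: D = div(chi^m) *)
Definition trivial_bundle (N : nat) (v : 'I_N -> 'I_3 -> int) (a : 'I_N -> int) : Prop :=
  exists m : 'I_3 -> int, forall t, a t = \sum_(r < 3) m r * v t r.

(* Main.v *)
Require Import Defs.
From HB Require Import structures.
From mathcomp Require Import all_boot all_order all_algebra.
From mathcomp Require Import ring lra zify.
Set Implicit Arguments. Unset Strict Implicit. Unset Printing Implicit Defensive.
Import Order.TTheory GRing.Theory Num.Theory.
Local Open Scope ring_scope.


Definition i0 : 'I_3 := @Ordinal 3 0 isT.
Definition i1 : 'I_3 := @Ordinal 3 1 isT.
Definition i2 : 'I_3 := @Ordinal 3 2 isT.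

Lemma ord3P (P : 'I_3 -> Prop) : P i0 -> P i1 -> P i2 -> forall s, P s.
Proof.
move=> H0 H1 H2 [[|[|[|m]]] Hm] //.
- by rewrite (bool_irrelevance Hm isT).
- by rewrite (bool_irrelevance Hm isT).
- by rewrite (bool_irrelevance Hm isT).
Qed.

Lemma sum3 (R : nmodType) (F : 'I_3 -> R) : \sum_(r < 3) F r = F i0 + F i1 + F i2.
Proof.
rewrite !big_ord_recl big_ord0 addr0 addrA.
by congr (F _ + F _ + F _); apply: val_inj.
Qed.

Definition det3 (a b c : 'I_3 -> int) : int :=
  a i0 * (b i1 * c i2 - b i2 * c i1) + a i1 * (b i2 * c i0 - b i0 * c i2)
  + a i2 * (b i0 * c i1 - b i1 * c i0).

Lemma det_mx3 (R : comNzRingType) (A : 'M[R]_3) : \det A =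
  A i0 i0 * (A i1 i1 * A i2 i2 - A i2 i1 * A i1 i2)
  + A i1 i0 * (A i2 i1 * A i0 i2 - A i0 i1 * A i2 i2)
  + A i2 i0 * (A i0 i1 * A i1 i2 - A i1 i1 * A i0 i2).
Proof.
rewrite (expand_det_col _ i0) sum3 /cofactor.
rewrite !(expand_det_col _ ord0) !big_ord_recl big_ord0 /cofactor.
rewrite !det_mx11 !mxE !big_ord0.
set f := fun a b : nat => A (inord a) (inord b).
have HA : forall k l : 'I_3, A k l = f k l by move=> k l; rewrite /f !inord_val.
rewrite !HA /=.
rewrite /f; ring.
Qed.

Definition vq N (v : 'I_N -> 'I_3 -> int) (t : 'I_N) (s : 'I_3) : rat := (v t s)%:~R.

Lemma detmx3E N (v : 'I_N -> 'I_3 -> int) i j k :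
  \det (mx3 v i j k) = det3 (v i) (v j) (v k).
Proof. by rewrite det_mx3 !mxE /= /det3; ring. Qed.

Lemma det3Q (a b c : 'I_3 -> int) : ((det3 a b c)%:~R : rat) =
  (a i0)%:~R * ((b i1)%:~R * (c i2)%:~R - (b i2)%:~R * (c i1)%:~R)
  + (a i1)%:~R * ((b i2)%:~R * (c i0)%:~R - (b i0)%:~R * (c i2)%:~R)
  + (a i2)%:~R * ((b i0)%:~R * (c i1)%:~R - (b i1)%:~R * (c i0)%:~R).
Proof. rewrite /det3 !intrD !intrM !intrB !intrM. reflexivity. Qed.

Lemma cV3P (x y : 'cV[rat]_3) : (forall s, x s 0 = y s 0) -> x = y.
Proof. by move=> H; apply/matrixP => r c; rewrite (ord1 c). Qed.

Lemma vecQE N (v : 'I_N -> 'I_3 -> int) t s : vecQ v t s 0 = vq v t s.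
Proof. by rewrite /vecQ mxE. Qed.

Lemma sum_supp3 N (F : 'I_N -> rat) p q r : p != q -> p != r -> q != r ->
  (forall t, t \notin [set p; q; r] -> F t = 0) -> \sum_t F t = F p + F q + F r.
Proof.
move=> pq pr qr H.
have qp : q != p by rewrite eq_sym.
have rpq : (r != p) && (r != q) by rewrite eq_sym pr eq_sym qr.
rewrite (bigD1 p) // (bigD1 q) // (bigD1 r) //.
rewrite big1 /=; first by rewrite addr0 !addrA.
move=> t /andP[/andP[tp tq] tr].
by apply: H; rewrite !inE negb_or negb_or tp tq tr.
Qed.

Lemma indep3 N (v : 'I_N -> 'I_3 -> int) p q r (a b c : rat) :
  det3 (v p) (v q) (v r) != 0 ->
  (forall s, a * vq v p s + b * vq v q s + c * vq v r s = 0) ->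
  [/\ a = 0, b = 0 & c = 0].
Proof.
move=> hD H.
have hD' : ((det3 (v p) (v q) (v r))%:~R : rat) != 0 by rewrite intr_eq0.
move: hD'; rewrite det3Q => hD'.
have E0 := H i0; have E1 := H i1; have E2 := H i2.
move: E0 E1 E2; rewrite /vq.
set P0 := ((v p i0)%:~R : rat); set P1 := ((v p i1)%:~R : rat); set P2 := ((v p i2)%:~R : rat).
set Q0 := ((v q i0)%:~R : rat); set Q1 := ((v q i1)%:~R : rat); set Q2 := ((v q i2)%:~R : rat).
set R0 := ((v r i0)%:~R : rat); set R1 := ((v r i1)%:~R : rat); set R2 := ((v r i2)%:~R : rat).
set D := (X in X != 0) in hD'.
move=> E0 E1 E2.
have Ha : a * D = (Q1*R2 - Q2*R1) * (a * P0 + b * Q0 + c * R0)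
   + (Q2*R0 - Q0*R2) * (a * P1 + b * Q1 + c * R1)
   + (Q0*R1 - Q1*R0) * (a * P2 + b * Q2 + c * R2) by rewrite /D; ring.
have Hb : b * D = (R1*P2 - R2*P1) * (a * P0 + b * Q0 + c * R0)
   + (R2*P0 - R0*P2) * (a * P1 + b * Q1 + c * R1)
   + (R0*P1 - R1*P0) * (a * P2 + b * Q2 + c * R2) by rewrite /D; ring.
have Hc : c * D = (P1*Q2 - P2*Q1) * (a * P0 + b * Q0 + c * R0)
   + (P2*Q0 - P0*Q2) * (a * P1 + b * Q1 + c * R1)
   + (P0*Q1 - P1*Q0) * (a * P2 + b * Q2 + c * R2) by rewrite /D; ring.
rewrite E0 E1 E2 !mulr0 !addr0 in Ha Hb Hc.
move/eqP: Ha; move/eqP: Hb; move/eqP: Hc.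
rewrite !mulf_eq0 (negbTE hD') !orbF => /eqP -> /eqP -> /eqP ->.
by [].
Qed.

Lemma in_cone_sub3 N (v : 'I_N -> 'I_3 -> int) (S : {set 'I_N}) (x : 'cV[rat]_3) (p q r : 'I_N) :
  p != q -> p != r -> q != r -> S \subset [set p; q; r] -> in_cone v S x ->
  exists a b c : rat, [/\ 0 <= a, 0 <= b & 0 <= c] /\
    [/\ (a != 0 -> p \in S), (b != 0 -> q \in S) & (c != 0 -> r \in S)] /\
    forall s, x s 0 = a * vq v p s + b * vq v q s + c * vq v r s.
Proof.
move=> pq pr qr sS [lam [l0 [lS ->]]].
exists (lam p), (lam q), (lam r); split; [split => //|split; [split|]].
- by apply: contraR => /lS ->.
- by apply: contraR => /lS ->.
- by apply: contraR => /lS ->.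
move=> s; rewrite summxE (@sum_supp3 _ _ p q r) // ?mxE.
  by rewrite /vq.
move=> t tS; have -> : lam t = 0.
  by apply: lS; apply: contra tS; apply: (subsetP sS).
by rewrite scale0r mxE.
Qed.

Lemma in_cone_of3 N (v : 'I_N -> 'I_3 -> int) (S : {set 'I_N}) (x : 'cV[rat]_3) (p q r : 'I_N) (a b c : rat) :
  p != q -> p != r -> q != r -> 0 <= a -> 0 <= b -> 0 <= c ->
  (a != 0 -> p \in S) -> (b != 0 -> q \in S) -> (c != 0 -> r \in S) ->
  (forall s, x s 0 = a * vq v p s + b * vq v q s + c * vq v r s) -> in_cone v S x.
Proof.
move=> pq pr qr a0 b0 c0 aS bS cS Hx.
exists (fun t => if t == p then a else if t == q then b else if t == r then c else 0).
split; [|split].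
- by move=> t; case: ifP => _ //; case: ifP => _ //; case: ifP => _ //.
- move=> t tS; case: ifP => [/eqP tp|_]; first by subst; apply: (contraNeq aS tS).
  case: ifP => [/eqP tq|_]; first by subst; apply: (contraNeq bS tS).
  case: ifP => [/eqP tr|_]; first by subst; apply: (contraNeq cS tS).
  by [].
apply: cV3P => s; rewrite Hx summxE (@sum_supp3 _ _ p q r) //.
  have qp : (q == p) = false by rewrite eq_sym (negbTE pq).
  have rp : (r == p) = false by rewrite eq_sym (negbTE pr).
  have rq : (r == q) = false by rewrite eq_sym (negbTE qr).
  by rewrite !mxE !eqxx qp rp rq.
move=> t; rewrite !inE !negb_or => /andP[/andP[/negbTE -> /negbTE ->] /negbTE ->].
by rewrite scale0r mxE.
Qed.

Lemma set3E (T : finType) (a b c : T) : [set a; b; c] = a |: (b |: [set c]).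
Proof. by apply/setP => x; rewrite !inE orbA. Qed.
Lemma card3 (T : finType) (a b c : T) : a != b -> a != c -> b != c -> #|[set a; b; c]| = 3%N.
Proof. by move=> ab ac bc; rewrite set3E !cardsU1 cards1 !inE negb_or ab ac bc. Qed.
Lemma card3le (T : finType) (a b c : T) : (#|[set a; b; c]| <= 3)%N.
Proof. rewrite set3E !cardsU1 cards1. by case: (_ \notin _); case: (_ \notin _). Qed.
Lemma set3C12 (T : finType) (a b c : T) : [set a; b; c] = [set b; a; c].
Proof. by apply/setP => x; rewrite !inE (orbC (x == a)). Qed.
Lemma set3C23 (T : finType) (a b c : T) : [set a; b; c] = [set a; c; b].
Proof. by apply/setP => x; rewrite !inE -!orbA (orbC (x == b)). Qed.
Lemma imset3 (aT rT : finType) (f : aT -> rT) a b c :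
  f @: [set a; b; c] = [set f a; f b; f c].
Proof. by rewrite !set3E !imsetU1 imset_set1. Qed.

Lemma det3_12 a c : det3 a a c = 0. Proof. by rewrite /det3; ring. Qed.
Lemma det3_13 a b : det3 a b a = 0. Proof. by rewrite /det3; ring. Qed.
Lemma det3_23 a b : det3 a b b = 0. Proof. by rewrite /det3; ring. Qed.

Lemma det3_neq N (v : 'I_N -> 'I_3 -> int) p q r : det3 (v p) (v q) (v r) != 0 ->
  [/\ p != q, p != r & q != r].
Proof.
move=> hD; split; apply/eqP => E; move: hD; rewrite E ?det3_12 ?det3_13 ?det3_23 eqxx //.
Qed.

Lemma coord_uniq N (v : 'I_N -> 'I_3 -> int) p q r (a b c a' b' c' : rat) :
  det3 (v p) (v q) (v r) != 0 ->
  (forall s, a * vq v p s + b * vq v q s + c * vq v r s =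
             a' * vq v p s + b' * vq v q s + c' * vq v r s) ->
  [/\ a = a', b = b' & c = c'].
Proof.
move=> hD H.
have [] := @indep3 N v p q r (a - a') (b - b') (c - c') hD.
  move=> s; have -> : (a - a') * vq v p s + (b - b') * vq v q s + (c - c') * vq v r s =
    (a * vq v p s + b * vq v q s + c * vq v r s) - (a' * vq v p s + b' * vq v q s + c' * vq v r s)
    by ring.
  by rewrite H subrr.
by move=> /eqP; rewrite subr_eq0 => /eqP -> /eqP; rewrite subr_eq0 => /eqP -> /eqP; rewrite subr_eq0 => /eqP ->.
Qed.

Lemma relE N (v : 'I_N -> 'I_3 -> int) a b c d (x y : rat) :
  (vecQ v a + vecQ v b + x *: vecQ v c + y *: vecQ v d = 0) <->
  (forall s, vq v a s + vq v b s + x * vq v c s + y * vq v d s = 0).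
Proof.
split.
  by move=> H s; have := congr1 (fun M : 'cV[rat]_3 => M s 0) H; rewrite !mxE.
by move=> H; apply: cV3P => s; rewrite !mxE H.
Qed.

Lemma eq0_by (x y : rat) : y = 0 -> x = y -> x = 0.
Proof. by move=> -> ->. Qed.

Lemma rank3 N (v : 'I_N -> 'I_3 -> int) p q r : det3 (v p) (v q) (v r) != 0 ->
  \rank (rayMatrix v) = 3%N.
Proof.
move=> hD; apply/eqP; rewrite eqn_leq; apply/andP; split; first exact: rank_leq_row.
pose P : 'M[rat]_(N, 3) := \matrix_(t, s) ((t == tri p q r s)%:R).
have HP : rayMatrix v *m P = \matrix_(rr, s) vq v (tri p q r s) rr.
  apply/matrixP => rr s; rewrite !mxE (bigD1 (tri p q r s)) //= !mxE eqxx mulr1.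
  rewrite big1 ?addr0 // => t /negbTE tn; by rewrite !mxE tn mulr0.
have : (\rank (rayMatrix v *m P) = 3)%N.
  apply: mxrank_unit; rewrite unitmxE unitfE HP det_mx3 !mxE /=.
  by move: hD; rewrite -(intr_eq0 rat) det3Q /vq.
by move=> H; apply: (leq_trans _ (mxrankM_maxl _ P)); rewrite H.
Qed.

Definition dotm (m : int * int * int) (u : 'I_3 -> int) : int :=
  m.1.1 * u i0 + m.1.2 * u i1 + m.2 * u i2.

Lemma phi_sum N (v : 'I_N -> 'I_3 -> int) (lam : 'I_N -> rat) (m : int * int * int) :
  (m.1.1)%:~R * (\sum_t lam t *: vecQ v t) i0 0 + (m.1.2)%:~R * (\sum_t lam t *: vecQ v t) i1 0
  + (m.2)%:~R * (\sum_t lam t *: vecQ v t) i2 0 = \sum_t lam t * (dotm m (v t))%:~R.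
Proof.
rewrite !summxE !mulr_sumr -!big_split /=; apply: eq_bigr => t _.
by rewrite !mxE /dotm !intrD !intrM; ring.
Qed.

Lemma sep_fan N (v : 'I_N -> 'I_3 -> int) (c d : {set 'I_N}) (m : int * int * int) :
  (forall t, t \in c -> (0 <= dotm m (v t)) && ((dotm m (v t) == 0) ==> (t \in d))) ->
  (forall t, t \in d -> dotm m (v t) <= 0) ->
  forall x, in_cone v c x -> in_cone v d x -> in_cone v (c :&: d) x.
Proof.
move=> Hc Hd x [lam [l0 [lS Ex]]] [lam' [l0' [lS' Ex']]].
have P1 : forall t, 0 <= lam t * (dotm m (v t))%:~R.
  move=> t; case tc: (t \in c).
    by have /andP[h _] := Hc t tc; apply: mulr_ge0 => //; rewrite ler0z.
  by rewrite lS ?tc // mul0r.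
have P2 : forall t, lam' t * (dotm m (v t))%:~R <= 0.
  move=> t; case td: (t \in d).
    by apply: mulr_ge0_le0 => //; rewrite lerz0; apply: Hd.
  by rewrite lS' ?td // mul0r.
have S0 : \sum_t lam t * (dotm m (v t))%:~R = 0.
  apply/eqP; rewrite eq_le; apply/andP; split; last by apply: sumr_ge0 => t _.
  rewrite -phi_sum -Ex Ex' phi_sum; by apply: sumr_le0 => t _.
have Z := psumr_eq0P (fun t _ => P1 t) S0.
exists lam; split => //; split => // t; rewrite in_setI negb_and => /orP[tc|td]; first exact: lS.
case tc: (t \in c); last by apply: lS; rewrite tc.
have /andP[h0 himp] := Hc t tc.
have := Z t isT; move/eqP; rewrite mulf_eq0 intr_eq0 => /orP[/eqP //|dz].
by move: td; rewrite (implyP himp dz).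
Qed.

Lemma wall_int N (v : 'I_N -> 'I_3 -> int) (C : {set {set 'I_N}}) (a : 'I_N -> int)
    (c c' : {set 'I_N}) (i j k l : 'I_N) (al be : int) :
  nef v C a -> c \in C -> c' \in C -> i \in c -> i \in c' -> j \in c -> j \in c' -> i != j ->
  k \in c -> k \notin c' -> l \in c' -> l \notin c ->
  (forall s, v k s + v l s + al * v i s + be * v j s = 0) ->
  0 <= a k + a l + al * a i + be * a j.
Proof.
move=> H cC c'C ic ic' jc jc' ij kc kc' lc' lc E.
have R : vecQ v k + vecQ v l + al%:~R *: vecQ v i + be%:~R *: vecQ v j = 0.
  by apply/relE => s; rewrite /vq -!intrM -!intrD E.
have := H c c' cC c'C i j k l ic ic' jc jc' ij kc kc' lc' lc _ _ R.
by rewrite -!intrM -!intrD ler0z.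
Qed.

Definition mk3 (p : int * int * int) (s : 'I_3) : int :=
  match nat_of_ord s with 0 => p.1.1 | 1 => p.1.2 | _ => p.2 end.


Definition Inv (n N : nat) (v : 'I_N -> 'I_3 -> int) (C : {set {set 'I_N}}) : Prop :=
  [/\ smooth_complete_fan v C, picard_number v = n,
      (forall a : 'I_N -> int, nef v C a -> trivial_bundle v a) &
      exists (i j k l : 'I_N) (al be : rat),
        [/\ [set i; j; k] \in C, [set i; j; l] \in C, k != l, l != i & l != j] /\
        (det3 (v i) (v j) (v k) = 1 \/ det3 (v i) (v j) (v k) = -1) /\
        vecQ v k + vecQ v l + al *: vecQ v i + be *: vecQ v j = 0].

Section Step.
Variables (N : nat) (v : 'I_N -> 'I_3 -> int) (C : {set {set 'I_N}}).
Variables (i j k l : 'I_N) (al be : rat).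
Hypothesis Hfan : smooth_complete_fan v C.
Hypothesis Hsig : [set i; j; k] \in C.
Hypothesis Hsig' : [set i; j; l] \in C.
Hypothesis Hkl : k != l.
Hypothesis Hli : l != i.
Hypothesis Hlj : l != j.
Hypothesis Hdet : det3 (v i) (v j) (v k) = 1 \/ det3 (v i) (v j) (v k) = -1.
Hypothesis Hrel : vecQ v k + vecQ v l + al *: vecQ v i + be *: vecQ v j = 0.

Definition sig := [set i; j; k].
Definition w : 'I_N -> 'I_N.+1 := lift ord_max.
Definition rho : 'I_N.+1 := ord_max.
Definition vrho : 'I_3 -> int := fun s => v i s + v j s + v k s.
Definition v' (t : 'I_N.+1) : 'I_3 -> int :=
  if unlift ord_max t is Some t0 then v t0 else vrho.
Definition nc (x y : 'I_N) : {set 'I_N.+1} := [set w x; w y; rho].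
Definition C' : {set {set 'I_N.+1}} :=
  [set w @: c | c : {set 'I_N} in C :\ sig] :|: [set nc i j; nc i k; nc j k].

Lemma Hdet0 : det3 (v i) (v j) (v k) != 0.
Proof. by case: Hdet => ->. Qed.

Lemma Hdist : [/\ i != j, i != k & j != k].
Proof. exact: (det3_neq Hdet0). Qed.

Lemma v'_w t : v' (w t) = v t.
Proof. by rewrite /v' /w liftK. Qed.
Lemma v'_rho : v' rho = vrho.
Proof. by rewrite /v' /rho unlift_none. Qed.
Lemma vq_w t s : vq v' (w t) s = vq v t s.
Proof. by rewrite /vq v'_w. Qed.
Lemma vq_rho s : vq v' rho s = vq v i s + vq v j s + vq v k s.
Proof. by rewrite /vq v'_rho /vrho !intrD. Qed.
Lemma vecQ_w t : vecQ v' (w t) = vecQ v t.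
Proof. by apply/matrixP => r c; rewrite !mxE v'_w. Qed.
Lemma w_inj : injective w.
Proof. exact: lift_inj. Qed.
Lemma rho_w t : (rho == w t) = false.
Proof. by apply/negbTE; apply: neq_lift. Qed.
Lemma w_rho t : (w t == rho) = false.
Proof. by rewrite eq_sym rho_w. Qed.
Lemma w_eq x y : (w x == w y) = (x == y).
Proof. exact: (inj_eq w_inj). Qed.
Lemma rho_notin_w (S : {set 'I_N}) : rho \notin w @: S.
Proof. by apply/imsetP => -[t _ /eqP]; rewrite rho_w. Qed.
Lemma w_in_w (S : {set 'I_N}) t : (w t \in w @: S) = (t \in S).
Proof. exact: (mem_imset _ _ w_inj). Qed.

Lemma w_widen t : widen_ord (leqnSn N) t = w t.
Proof. by apply: val_inj; rewrite /= /bump leqNgt ltn_ord. Qed.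

Lemma sumS (F : 'I_N.+1 -> 'cV[rat]_3) : \sum_t F t = \sum_t F (w t) + F rho.
Proof. by rewrite big_ord_recr; congr (_ + _); apply: eq_bigr => t _; rewrite w_widen. Qed.

Lemma in_cone_w (S : {set 'I_N}) x : in_cone v' (w @: S) x <-> in_cone v S x.
Proof.
split.
  move=> [lam [l0 [lS ->]]]; exists (fun t => lam (w t)); split; [by []|split].
    by move=> t tS; apply: lS; rewrite w_in_w.
  rewrite sumS (lS rho (rho_notin_w S)) scale0r addr0.
  by apply: eq_bigr => t _; rewrite vecQ_w.
move=> [lam [l0 [lS ->]]].
exists (fun t => if unlift ord_max t is Some t0 then lam t0 else 0); split; [|split].
- by move=> t; case: (unlift _ _).
- move=> t; case: (unliftP ord_max t) => [t0 ->|->] //.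
  by rewrite w_in_w => /lS.
rewrite sumS /rho unlift_none scale0r addr0.
by apply: eq_bigr => t _; rewrite /w liftK -/w vecQ_w.
Qed.


Definition isperm (x y z : 'I_N) : bool :=
  [|| (x,y,z) == (i,j,k), (x,y,z) == (i,k,j), (x,y,z) == (j,i,k),
      (x,y,z) == (j,k,i), (x,y,z) == (k,i,j) | (x,y,z) == (k,j,i)].

Lemma nc_sym x y : nc x y = nc y x.
Proof. by rewrite /nc set3C12. Qed.

Lemma nc_ij : nc i j \in C'. Proof. by rewrite /C' !inE eqxx !orbT. Qed.
Lemma nc_ik : nc i k \in C'. Proof. by rewrite /C' !inE eqxx !orbT. Qed.
Lemma nc_jk : nc j k \in C'. Proof. by rewrite /C' !inE eqxx !orbT. Qed.

Lemma det3_acb a b c : det3 a c b = - det3 a b c. Proof. by rewrite /det3; ring. Qed.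
Lemma det3_bac a b c : det3 b a c = - det3 a b c. Proof. by rewrite /det3; ring. Qed.
Lemma det3_bca a b c : det3 b c a = det3 a b c. Proof. by rewrite /det3; ring. Qed.
Lemma det3_cab a b c : det3 c a b = det3 a b c. Proof. by rewrite /det3; ring. Qed.
Lemma det3_cba a b c : det3 c b a = - det3 a b c. Proof. by rewrite /det3; ring. Qed.

Lemma isperm_det x y z : isperm x y z ->
  det3 (v x) (v y) (v z) = det3 (v i) (v j) (v k) \/
  det3 (v x) (v y) (v z) = - det3 (v i) (v j) (v k).
Proof.
rewrite /isperm.
by case/orP => [E|/orP [E|/orP [E|/orP [E|/orP [E|E]]]]]; case/eqP: E => -> -> ->;
  [left|right|right|left|left|right]; rewrite /det3; ring.
Qed.

Lemma isperm_facts x y z : isperm x y z ->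
  [/\ [set x; y; z] = sig, det3 (v x) (v y) (v z) != 0,
      (forall s, vq v' rho s = vq v x s + vq v y s + vq v z s) & nc x y \in C']
  /\ [/\ x != y, x != z & y != z].
Proof.
move=> hp.
have hD : det3 (v x) (v y) (v z) != 0.
  by case: (isperm_det hp) => ->; rewrite ?oppr_eq0 Hdet0.
have [xy xz yz] := det3_neq hD.
split; split => //; move: hp; rewrite /isperm.
- by case/orP => [E|/orP [E|/orP [E|/orP [E|/orP [E|E]]]]]; case/eqP: E => -> -> ->;
    apply/setP => t; rewrite /sig !inE; case: (t == i); case: (t == j); case: (t == k).
- by case/orP => [E|/orP [E|/orP [E|/orP [E|/orP [E|E]]]]]; case/eqP: E => -> -> -> s;
    rewrite vq_rho; ring.
- by case/orP => [E|/orP [E|/orP [E|/orP [E|/orP [E|E]]]]]; case/eqP: E => -> -> _;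
    rewrite ?nc_ij ?nc_ik ?nc_jk // nc_sym ?nc_ij ?nc_ik ?nc_jk.
Qed.

Lemma perm_of_mem x y z : x \in sig -> y \in sig -> z \in sig ->
  x != y -> x != z -> y != z -> isperm x y z.
Proof.
rewrite /sig !inE.
move=> /orP[/orP[/eqP->|/eqP->]|/eqP->] /orP[/orP[/eqP->|/eqP->]|/eqP->]
  /orP[/orP[/eqP->|/eqP->]|/eqP->]; rewrite ?eqxx //= => *;
  by rewrite /isperm !eqxx ?orbT.
Qed.

Lemma sub_sig d : d \in C -> sig \subset d -> d = sig.
Proof.
have [Hinj Hsm Hray Hfn Hcomp] := Hfan.
move=> dC sub; have [a [b [c [Ed _]]]] := Hsm d dC.
have [ij ik jk] := Hdist.
apply/eqP; rewrite eq_sym eqEcard sub /= /sig card3 // Ed.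
exact: card3le.
Qed.

Lemma C'P c : c \in C' ->
  (exists d, [/\ d \in C, d != sig & c = w @: d]) \/ [\/ c = nc i j, c = nc i k | c = nc j k].
Proof.
rewrite /C' in_setU => /orP[/imsetP[d]|].
  by rewrite in_setD1 => /andP[dsig dC] ->; left; exists d.
by rewrite !inE => /orP[/orP[/eqP->|/eqP->]|/eqP->]; right; [apply: Or31|apply: Or32|apply: Or33].
Qed.


Lemma w_ne_rho t : w t != rho. Proof. by rewrite w_rho. Qed.
Lemma w_ne x y : x != y -> w x != w y. Proof. by rewrite w_eq. Qed.

Lemma in_nc1 x y : w x \in nc x y. Proof. by rewrite /nc !inE eqxx. Qed.
Lemma in_nc2 x y : w y \in nc x y. Proof. by rewrite /nc !inE eqxx !orbT. Qed.
Lemma in_nc3 x y : rho \in nc x y. Proof. by rewrite /nc !inE eqxx !orbT. Qed.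

Lemma fan_old_new d p q r x : d \in C -> d != sig -> isperm p q r ->
  in_cone v' (w @: d) x -> in_cone v' (nc p q) x -> in_cone v' (w @: d :&: nc p q) x.
Proof.
have [Hinj Hsm Hray Hfn Hcomp] := Hfan.
move=> dC dsig hp H1 H2.
have [[Ep hD hrho _] [pq pr qr]] := isperm_facts hp.
have [a [b [e [[a0 b0 e0] [[_ _ _] Hx]]]]] :=
  in_cone_sub3 (S := nc p q) (w_ne pq) (w_ne_rho p) (w_ne_rho q) (subxx _) H2.
have Hx' : forall s, x s 0 = (a + e) * vq v p s + (b + e) * vq v q s + e * vq v r s.
  by move=> s; rewrite Hx !vq_w hrho; ring.
have Hs : in_cone v sig x.
  rewrite -Ep; apply: (in_cone_of3 (a := a + e) (b := b + e) (c := e)) pq pr qr _ _ _ _ _ _ Hx';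
   rewrite ?inE ?eqxx ?orbT //; lra.
have Hd : in_cone v d x by apply/in_cone_w.
have Hds := Hfn d sig dC Hsig x Hd Hs.
have sub : d :&: sig \subset [set p; q; r] by rewrite Ep; apply: subsetIr.
have [a' [b' [e' [_ [[ap bq er] Hx2]]]]] := in_cone_sub3 pq pr qr sub Hds.
have [ea eb ee] := coord_uniq hD (fun s => etrans (esym (Hx2 s)) (Hx' s)).
have e00 : e = 0.
  apply/eqP; apply/negPn/negP => enz.
  have ez : 0 < e by rewrite lt_def enz e0.
  have : sig \subset d.
    apply/subsetP => t; rewrite -Ep !inE => /orP[/orP[/eqP->|/eqP->]|/eqP->].
    - have : p \in d :&: sig by apply: ap; rewrite ea; apply/eqP; lra.
      by rewrite inE => /andP[].
    - have : q \in d :&: sig by apply: bq; rewrite eb; apply/eqP; lra.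
      by rewrite inE => /andP[].
    - have : r \in d :&: sig by apply: er; rewrite ee.
      by rewrite inE => /andP[].
  by move/(sub_sig dC) => E; rewrite E eqxx in dsig.
apply: (@in_cone_of3 _ v' (w @: d :&: nc p q) x _ _ _ a b 0 (w_ne pq) (w_ne_rho p) (w_ne_rho q) a0 b0 (lexx 0)).
- move=> anz; rewrite in_setI in_nc1 andbT w_in_w.
  have : p \in d :&: sig by apply: ap; rewrite ea e00 addr0.
  by rewrite inE => /andP[].
- move=> bnz; rewrite in_setI in_nc2 andbT w_in_w.
  have : q \in d :&: sig by apply: bq; rewrite eb e00 addr0.
  by rewrite inE => /andP[].
- by rewrite eqxx.
- by move=> s; rewrite Hx e00.
Qed.

Lemma fan_new_new p q r x : isperm p q r ->
  in_cone v' (nc p q) x -> in_cone v' (nc p r) x -> in_cone v' (nc p q :&: nc p r) x.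
Proof.
move=> hp H1 H2.
have [[Ep hD hrho _] [pq pr qr]] := isperm_facts hp.
have [a [b [e [[a0 b0 e0] [[_ _ _] Hx]]]]] :=
  in_cone_sub3 (S := nc p q) (w_ne pq) (w_ne_rho p) (w_ne_rho q) (subxx _) H1.
have [a2 [b2 [e2 [[a20 b20 e20] [[_ _ _] Hx2]]]]] :=
  in_cone_sub3 (S := nc p r) (w_ne pr) (w_ne_rho p) (w_ne_rho r) (subxx _) H2.
have Hx' : forall s, x s 0 = (a + e) * vq v p s + (b + e) * vq v q s + e * vq v r s.
  by move=> s; rewrite Hx !vq_w hrho; ring.
have Hx2' : forall s, x s 0 = (a2 + e2) * vq v p s + e2 * vq v q s + (b2 + e2) * vq v r s.
  by move=> s; rewrite Hx2 !vq_w hrho; ring.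
have [_ eb ee] := coord_uniq hD (fun s => etrans (esym (Hx' s)) (Hx2' s)).
have b00 : b = 0 by lra.
apply: (in_cone_of3 (a := a) (b := b) (c := e)) (w_ne pq) (w_ne_rho p) (w_ne_rho q) _ _ _ _ _ _ Hx => //.
- by move=> _; rewrite in_setI !in_nc1.
- by rewrite b00 eqxx.
- by move=> _; rewrite in_setI !in_nc3.
Qed.

Lemma fan' c c' : c \in C' -> c' \in C' -> forall x,
  in_cone v' c x -> in_cone v' c' x -> in_cone v' (c :&: c') x.
Proof.
have [Hinj Hsm Hray Hfn Hcomp] := Hfan.
have hij : isperm i j k by rewrite /isperm eqxx.
have hik : isperm i k j by rewrite /isperm !eqxx ?orbT.
have hji : isperm j i k by rewrite /isperm !eqxx ?orbT.
have hjk : isperm j k i by rewrite /isperm !eqxx ?orbT.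
have hki : isperm k i j by rewrite /isperm !eqxx ?orbT.
have hkj : isperm k j i by rewrite /isperm !eqxx ?orbT.
move=> /C'P[[d [dC dsig ->]]|[->|->|->]] /C'P[[d' [dC' dsig' ->]]|[->|->|->]] x H1 H2.
- rewrite -imsetI; last by move=> ? ? ? ?; apply: w_inj.
  apply/in_cone_w; apply: Hfn => //; exact/in_cone_w.
- exact: fan_old_new hij H1 H2.
- exact: fan_old_new hik H1 H2.
- exact: fan_old_new hjk H1 H2.
- by rewrite setIC; apply: fan_old_new hij H2 H1.
- by rewrite setIid.
- exact: fan_new_new hij H1 H2.
- by move: H1; rewrite !(nc_sym i j) => H1; apply: fan_new_new hji H1 H2.
- by rewrite setIC; apply: fan_old_new hik H2 H1.
- exact: fan_new_new hik H1 H2.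
- by rewrite setIid.
- by move: H1 H2; rewrite !(nc_sym i k) !(nc_sym j k) => H1 H2; apply: fan_new_new hki H1 H2.
- by rewrite setIC; apply: fan_old_new hjk H2 H1.
- by move: H2; rewrite !(nc_sym i j) => H2; apply: fan_new_new hjk H1 H2.
- by move: H1 H2; rewrite !(nc_sym i k) !(nc_sym j k) => H1 H2; apply: fan_new_new hkj H1 H2.
- by rewrite setIid.
Qed.


Lemma in_cone_ray (S : {set 'I_N}) t : t \in S -> in_cone v S (vecQ v t).
Proof.
move=> tS; exists (fun s => if s == t then 1 else 0); split; [|split].
- by move=> s; case: ifP.
- by move=> s; case: eqP => // -> ; rewrite tS.
rewrite (bigD1 t) //= eqxx scale1r big1 ?addr0 // => s /negbTE ->.
by rewrite scale0r.
Qed.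

Lemma no_rho t : v t <> vrho.
Proof.
have [Hinj Hsm Hray Hfn Hcomp] := Hfan.
have [ij ik jk] := Hdist.
move=> E.
have [c [cC tc]] := Hray t.
have H1 := in_cone_ray tc.
have Hy : forall s, vecQ v t s 0 = 1 * vq v i s + 1 * vq v j s + 1 * vq v k s.
  by move=> s; rewrite vecQE /vq E /vrho !intrD !mul1r.
have H2 : in_cone v sig (vecQ v t).
  apply: (in_cone_of3 (a := 1) (b := 1) (c := 1)) ij ik jk _ _ _ _ _ _ Hy => //;
    by rewrite /sig !inE eqxx ?orbT.
have H3 := Hfn c sig cC Hsig _ H1 H2.
have [a [b [e [_ [[ai bj ek] Hx]]]]] := in_cone_sub3 ij ik jk (subsetIr c sig) H3.
have [ea eb ee] := coord_uniq Hdet0 (fun s => etrans (esym (Hx s)) (Hy s)).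
have : sig \subset c.
  apply/subsetP => u; rewrite /sig !inE => /orP[/orP[/eqP->|/eqP->]|/eqP->].
  - by have := ai; rewrite ea oner_eq0 inE => /(_ isT) /andP[].
  - by have := bj; rewrite eb oner_eq0 inE => /(_ isT) /andP[].
  - by have := ek; rewrite ee oner_eq0 inE => /(_ isT) /andP[].
move/(sub_sig cC) => Ec; move: tc; rewrite Ec /sig !inE => /orP[/orP[/eqP Et|/eqP Et]|/eqP Et];
  subst t.
- have Hy' : forall s, vecQ v i s 0 = 1 * vq v i s + 0 * vq v j s + 0 * vq v k s.
    by move=> s; rewrite vecQE; ring.
  have [_ F _] := coord_uniq Hdet0 (fun s => etrans (esym (Hy' s)) (Hy s)).
  by move: F; move/eqP; rewrite eq_sym oner_eq0.
- have Hy' : forall s, vecQ v j s 0 = 0 * vq v i s + 1 * vq v j s + 0 * vq v k s.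
    by move=> s; rewrite vecQE; ring.
  have [F _ _] := coord_uniq Hdet0 (fun s => etrans (esym (Hy' s)) (Hy s)).
  by move: F; move/eqP; rewrite eq_sym oner_eq0.
- have Hy' : forall s, vecQ v k s 0 = 0 * vq v i s + 0 * vq v j s + 1 * vq v k s.
    by move=> s; rewrite vecQE; ring.
  have [F _ _] := coord_uniq Hdet0 (fun s => etrans (esym (Hy' s)) (Hy s)).
  by move: F; move/eqP; rewrite eq_sym oner_eq0.
Qed.

Lemma inj' : injective v'.
Proof.
have [Hinj Hsm Hray Hfn Hcomp] := Hfan.
move=> x y.
case: (unliftP ord_max x) => [x0 ->|->]; case: (unliftP ord_max y) => [y0 ->|->] //.
- by rewrite -/(w x0) -/(w y0) !v'_w => /Hinj ->.
- by rewrite -/(w x0) -/rho v'_w v'_rho => /no_rho.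
- by rewrite -/(w y0) -/rho v'_w v'_rho => E; case: (no_rho (esym E)).
Qed.

Lemma mx3_w a b c : mx3 v' (w a) (w b) (w c) = mx3 v a b c.
Proof.
have tri_w s : tri (w a) (w b) (w c) s = w (tri a b c s) by case: s => [[|[|m]] Hm].
by apply/matrixP => r s; rewrite !mxE tri_w v'_w.
Qed.

Lemma smooth' c : c \in C' -> exists a b e : 'I_N.+1,
  c = [set a; b; e] /\ (\det (mx3 v' a b e) = 1 \/ \det (mx3 v' a b e) = -1).
Proof.
have [Hinj Hsm Hray Hfn Hcomp] := Hfan.
move=> /C'P[[d [dC dsig ->]]|[->|->|->]].
- have [a [b [e [-> hd]]]] := Hsm d dC.
  by exists (w a), (w b), (w e); rewrite imset3 mx3_w.
- exists (w i), (w j), rho; split => //; rewrite detmx3E !v'_w v'_rho.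
  have -> : det3 (v i) (v j) vrho = det3 (v i) (v j) (v k) by rewrite /det3 /vrho; ring.
  exact: Hdet.
- exists (w i), (w k), rho; split => //; rewrite detmx3E !v'_w v'_rho.
  have -> : det3 (v i) (v k) vrho = - det3 (v i) (v j) (v k) by rewrite /det3 /vrho; ring.
  by case: Hdet => ->; [right|left]; rewrite ?opprK.
- exists (w j), (w k), rho; split => //; rewrite detmx3E !v'_w v'_rho.
  have -> : det3 (v j) (v k) vrho = det3 (v i) (v j) (v k) by rewrite /det3 /vrho; ring.
  exact: Hdet.
Qed.

Lemma old_in d : d \in C -> d != sig -> w @: d \in C'.
Proof.
move=> dC dsig; rewrite /C' in_setU; apply/orP; left.
by apply/imsetP; exists d => //; rewrite in_setD1 dsig dC.
Qed.

Lemma rays' t : exists c, c \in C' /\ t \in c.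
Proof.
have [Hinj Hsm Hray Hfn Hcomp] := Hfan.
case: (unliftP ord_max t) => [t0 ->|->]; last by exists (nc i j); rewrite nc_ij in_nc3.
rewrite -/(w t0).
have [c [cC tc]] := Hray t0.
case: (eqVneq c sig) => [Ec|csig]; last by exists (w @: c); rewrite old_in // w_in_w.
move: tc; rewrite Ec /sig !inE => /orP[/orP[/eqP->|/eqP->]|/eqP->].
- by exists (nc i j); rewrite nc_ij in_nc1.
- by exists (nc i j); rewrite nc_ij in_nc2.
- by exists (nc i k); rewrite nc_ik in_nc2.
Qed.

Lemma complete' x : exists c, c \in C' /\ in_cone v' c x.
Proof.
have [Hinj Hsm Hray Hfn Hcomp] := Hfan.
have [ij ik jk] := Hdist.
have [c [cC Hc]] := Hcomp x.
case: (eqVneq c sig) => [Ec|csig]; last by exists (w @: c); rewrite old_in //; split => //; apply/in_cone_w.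
move: Hc; rewrite Ec => Hc.
have [a [b [e [[a0 b0 e0] [_ Hx]]]]] := in_cone_sub3 ij ik jk (subxx _) Hc.
case: (boolP ((e <= a) && (e <= b))) => [/andP[ea eb]|h1].
  exists (nc i j); split; first exact: nc_ij.
  have E : forall s, x s 0 = (a - e) * vq v' (w i) s + (b - e) * vq v' (w j) s + e * vq v' rho s.
    by move=> s; rewrite Hx !vq_w vq_rho; ring.
  apply: (@in_cone_of3 _ v' (nc i j) x _ _ _ (a - e) (b - e) e (w_ne ij) (w_ne_rho i) (w_ne_rho j) _ _ _ _ _ _ E);
    rewrite ?in_nc1 ?in_nc2 ?in_nc3 //; lra.
case: (boolP ((b <= a) && (b <= e))) => [/andP[ba be']|h2].
  exists (nc i k); split; first exact: nc_ik.
  have E : forall s, x s 0 = (a - b) * vq v' (w i) s + (e - b) * vq v' (w k) s + b * vq v' rho s.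
    by move=> s; rewrite Hx !vq_w vq_rho; ring.
  apply: (@in_cone_of3 _ v' (nc i k) x _ _ _ (a - b) (e - b) b (w_ne ik) (w_ne_rho i) (w_ne_rho k) _ _ _ _ _ _ E);
    rewrite ?in_nc1 ?in_nc2 ?in_nc3 //; lra.
have [ab ae] : a <= b /\ a <= e.
  move: h1 h2; rewrite !negb_and -!ltNge.
  by case/orP => h1; case/orP => h2; split; lra.
exists (nc j k); split; first exact: nc_jk.
have E : forall s, x s 0 = (b - a) * vq v' (w j) s + (e - a) * vq v' (w k) s + a * vq v' rho s.
  by move=> s; rewrite Hx !vq_w vq_rho; ring.
apply: (@in_cone_of3 _ v' (nc j k) x _ _ _ (b - a) (e - a) a (w_ne jk) (w_ne_rho j) (w_ne_rho k) _ _ _ _ _ _ E);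
  rewrite ?in_nc1 ?in_nc2 ?in_nc3 //; lra.
Qed.

Lemma fan_Y : smooth_complete_fan v' C'.
Proof. split; [exact: inj'|exact: smooth'|exact: rays'|exact: fan'|exact: complete']. Qed.


Lemma notin_nc x y z : z != x -> z != y -> w z \notin nc x y.
Proof. by move=> zx zy; rewrite /nc !inE !w_eq w_rho orbF negb_or zx zy. Qed.

Lemma nef_down (a' : 'I_N.+1 -> int) : nef v' C' a' -> nef v C (fun t => a' (w t)).
Proof.
move=> H c c' cC c'C i0 j0 k0 l0 i0c i0c' j0c j0c' ij0 k0c k0c' l0c' l0c al0 be0 Hr.
have Hr' := (relE v k0 l0 i0 j0 al0 be0).1 Hr.
have ne_of x y : x \in c' -> y \notin c' -> x != y.
  by move=> xc yc; apply/eqP => E; move: yc; rewrite -E xc.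
have ne_of2 x y : x \in c -> y \notin c -> x != y.
  by move=> xc yc; apply/eqP => E; move: yc; rewrite -E xc.
case: (eqVneq c sig) => [Ec|csig]; case: (eqVneq c' sig) => [Ec'|c'sig].
- by move: k0c'; rewrite Ec' -Ec k0c.
- have ik0 := ne_of _ _ i0c' k0c'. have jk0 := ne_of _ _ j0c' k0c'.
  have ji0 : j0 != i0 by rewrite eq_sym.
  have ki0 : k0 != i0 by rewrite eq_sym.
  have kj0 : k0 != j0 by rewrite eq_sym.
  have li0 : l0 != i0 by rewrite eq_sym; apply: ne_of2.
  have lj0 : l0 != j0 by rewrite eq_sym; apply: ne_of2.
  have hp : isperm i0 j0 k0 by apply: perm_of_mem; rewrite -?Ec.
  have hp2 : isperm i0 k0 j0.
    by apply: perm_of_mem; rewrite -?Ec // eq_sym.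
  have [[_ _ hrho nc1in] _] := isperm_facts hp.
  have [[_ _ _ nc2in] _] := isperm_facts hp2.
  have Wi := H (nc i0 j0) (nc i0 k0) nc1in nc2in (w i0) rho (w j0) (w k0) (in_nc1 _ _) (in_nc1 _ _)
    (in_nc3 _ _) (in_nc3 _ _) (w_ne_rho i0) (in_nc2 _ _) (notin_nc ji0 jk0)
    (in_nc2 _ _) (notin_nc ki0 kj0) 1 (-1).
  have wi0 : w i0 \in w @: c' by rewrite w_in_w.
  have wj0 : w j0 \in w @: c' by rewrite w_in_w.
  have wl0 : w l0 \in w @: c' by rewrite w_in_w.
  have Wo := H (nc i0 j0) (w @: c') nc1in (old_in c'C c'sig) (w i0) (w j0) rho (w l0) (in_nc1 _ _)
    wi0 (in_nc2 _ _) wj0 (w_ne ij0) (in_nc3 _ _) (rho_notin_w _)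
    wl0 (notin_nc li0 lj0) (al0 - 1) (be0 - 1).
  have R1 : vecQ v' (w j0) + vecQ v' (w k0) + 1 *: vecQ v' (w i0) + (-1) *: vecQ v' rho = 0.
    by apply/relE => s; rewrite !vq_w hrho; ring.
  have R2 : vecQ v' rho + vecQ v' (w l0) + (al0 - 1) *: vecQ v' (w i0) + (be0 - 1) *: vecQ v' (w j0) = 0.
    by apply/relE => s; rewrite !vq_w hrho; apply: (eq0_by (Hr' s)); ring.
  have := Wi R1; have := Wo R2; move=> A B /=.
  nra.
- have il0 := ne_of2 _ _ i0c l0c. have jl0 := ne_of2 _ _ j0c l0c.
  have ji0 : j0 != i0 by rewrite eq_sym.
  have li0 : l0 != i0 by rewrite eq_sym.
  have lj0 : l0 != j0 by rewrite eq_sym.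
  have ki0 : k0 != i0 by rewrite eq_sym; apply: ne_of.
  have kj0 : k0 != j0 by rewrite eq_sym; apply: ne_of.
  have hp : isperm i0 j0 l0 by apply: perm_of_mem; rewrite -?Ec'.
  have hp2 : isperm i0 l0 j0 by apply: perm_of_mem; rewrite -?Ec'.
  have [[_ _ hrho nc1in] _] := isperm_facts hp.
  have [[_ _ _ nc2in] _] := isperm_facts hp2.
  have Wi := H (nc i0 j0) (nc i0 l0) nc1in nc2in (w i0) rho (w j0) (w l0) (in_nc1 _ _) (in_nc1 _ _)
    (in_nc3 _ _) (in_nc3 _ _) (w_ne_rho i0) (in_nc2 _ _) (notin_nc ji0 jl0)
    (in_nc2 _ _) (notin_nc li0 lj0) 1 (-1).
  have wi0 : w i0 \in w @: c by rewrite w_in_w.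
  have wj0 : w j0 \in w @: c by rewrite w_in_w.
  have wk0 : w k0 \in w @: c by rewrite w_in_w.
  have Wo := H (w @: c) (nc i0 j0) (old_in cC csig) nc1in (w i0) (w j0) (w k0) rho wi0 (in_nc1 _ _)
    wj0 (in_nc2 _ _) (w_ne ij0) wk0 (notin_nc ki0 kj0) (in_nc3 _ _) (rho_notin_w _)
    (al0 - 1) (be0 - 1).
  have R1 : vecQ v' (w j0) + vecQ v' (w l0) + 1 *: vecQ v' (w i0) + (-1) *: vecQ v' rho = 0.
    by apply/relE => s; rewrite !vq_w hrho; ring.
  have R2 : vecQ v' (w k0) + vecQ v' rho + (al0 - 1) *: vecQ v' (w i0) + (be0 - 1) *: vecQ v' (w j0) = 0.
    by apply/relE => s; rewrite !vq_w hrho; apply: (eq0_by (Hr' s)); ring.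
  have := Wi R1; have := Wo R2; move=> A B /=.
  nra.
- have := H (w @: c) (w @: c') (old_in cC csig) (old_in c'C c'sig) (w i0) (w j0) (w k0) (w l0).
  rewrite !w_in_w !vecQ_w w_eq => /(_ i0c i0c' j0c j0c' ij0 k0c k0c' l0c' l0c al0 be0 Hr).
  by [].
Qed.


Lemma sig'_ne : [set i; j; l] != sig.
Proof.
have [ij ik jk] := Hdist.
apply/eqP => E.
have : k \in [set i; j; l] by rewrite E /sig !inE eqxx orbT.
by rewrite !inE eq_sym (negbTE ik) eq_sym (negbTE jk) (negbTE Hkl).
Qed.

Lemma triv' (HX : forall a, nef v C a -> trivial_bundle v a) (a' : 'I_N.+1 -> int) :
  nef v' C' a' -> trivial_bundle v' a'.
Proof.
have [ij ik jk] := Hdist.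
move=> H.
have [m Hm] := HX _ (nef_down H).
have ji : j != i by rewrite eq_sym.
have ki : k != i by rewrite eq_sym.
have kj : k != j by rewrite eq_sym.
exists m => t.
case: (unliftP ord_max t) => [t0 ->|->]; first by rewrite -/(w t0) Hm v'_w.
rewrite -/rho.
have Wi := H (nc i j) (nc i k) nc_ij nc_ik (w i) rho (w j) (w k) (in_nc1 _ _) (in_nc1 _ _)
    (in_nc3 _ _) (in_nc3 _ _) (w_ne_rho i) (in_nc2 _ _) (notin_nc ji jk)
    (in_nc2 _ _) (notin_nc ki kj) 1 (-1).
have wi : w i \in w @: [set i; j; l] by rewrite w_in_w !inE eqxx.
have wj : w j \in w @: [set i; j; l] by rewrite w_in_w !inE eqxx orbT.
have wl : w l \in w @: [set i; j; l] by rewrite w_in_w !inE eqxx orbT.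
have Wo := H (nc i j) (w @: [set i; j; l]) nc_ij (old_in Hsig' sig'_ne) (w i) (w j) rho (w l)
    (in_nc1 _ _) wi (in_nc2 _ _) wj (w_ne ij) (in_nc3 _ _) (rho_notin_w _) wl
    (notin_nc Hli Hlj) (al - 1) (be - 1).
have Hr' := (relE v k l i j al be).1 Hrel.
have R1 : vecQ v' (w j) + vecQ v' (w k) + 1 *: vecQ v' (w i) + (-1) *: vecQ v' rho = 0.
  by apply/relE => s; rewrite !vq_w vq_rho; ring.
have R2 : vecQ v' rho + vecQ v' (w l) + (al - 1) *: vecQ v' (w i) + (be - 1) *: vecQ v' (w j) = 0.
  by apply/relE => s; rewrite !vq_w vq_rho; apply: (eq0_by (Hr' s)); ring.
have A := Wi R1; have B := Wo R2.
have HmQ x : ((a' (w x))%:~R : rat) =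
    (m i0)%:~R * vq v x i0 + (m i1)%:~R * vq v x i1 + (m i2)%:~R * vq v x i2.
  by rewrite Hm sum3 !intrD !intrM.
rewrite /= !HmQ in A B.
have E0 := Hr' i0; have E1 := Hr' i1; have E2 := Hr' i2.
apply/eqP; rewrite -(@eqr_int rat); apply/eqP; rewrite sum3 !intrD !intrM -!/(vq v' rho _) !vq_rho.
move: E0 E1 E2 A B.
set M0 := ((m i0)%:~R : rat); set M1 := ((m i1)%:~R : rat); set M2 := ((m i2)%:~R : rat).
set X := ((a' rho)%:~R : rat).
move=> E0 E1 E2 A B.
have Z : M0 * (vq v k i0 + vq v l i0 + al * vq v i i0 + be * vq v j i0)
       + M1 * (vq v k i1 + vq v l i1 + al * vq v i i1 + be * vq v j i1)
       + M2 * (vq v k i2 + vq v l i2 + al * vq v i i2 + be * vq v j i2) = 0.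
  by rewrite E0 E1 E2 !mulr0 !addr0.
nra.
Qed.

Lemma step_Inv n : picard_number v = n -> (forall a, nef v C a -> trivial_bundle v a) ->
  Inv n.+1 v' C'.
Proof.
move=> Hn HX.
have [ij ik jk] := Hdist.
have D' : det3 (v' (w i)) (v' (w j)) (v' rho) = det3 (v i) (v j) (v k).
  by rewrite !v'_w v'_rho /det3 /vrho; ring.
split.
- exact: fan_Y.
- have h3 : (3 <= N)%N.
    by have := max_card [set i; j; k]; rewrite card3 // card_ord.
  move: Hn; rewrite /picard_number (rank3 Hdet0).
  have D0 : det3 (v' (w i)) (v' (w j)) (v' rho) != 0 by rewrite D' Hdet0.
  rewrite (rank3 D0) => <-; lia.
- exact: triv' HX.
exists (w i), (w j), rho, (w l), (al - 1), (be - 1).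
split; [split|split].
- exact: nc_ij.
- by rewrite -imset3 old_in // sig'_ne.
- by rewrite rho_w.
- by rewrite w_eq.
- by rewrite w_eq.
- by rewrite D'.
- have Hr' := (relE v k l i j al be).1 Hrel.
  by apply/relE => s; rewrite !vq_w vq_rho; apply: (eq0_by (Hr' s)); ring.
Qed.

End Step.


Definition o0 : 'I_8 := @Ordinal 8 0 isT.
Definition o1 : 'I_8 := @Ordinal 8 1 isT.
Definition o2 : 'I_8 := @Ordinal 8 2 isT.
Definition o3 : 'I_8 := @Ordinal 8 3 isT.
Definition o4 : 'I_8 := @Ordinal 8 4 isT.
Definition o5 : 'I_8 := @Ordinal 8 5 isT.
Definition o6 : 'I_8 := @Ordinal 8 6 isT.
Definition o7 : 'I_8 := @Ordinal 8 7 isT.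
Definition rays0 : seq (seq int) := [:: [:: (-1); 2; 0]; [:: (-1); 1; (-1)]; [:: 0; (-1); (-1)]; [:: 2; (-1); 2]; [:: 0; (-1); 0]; [:: (-1); 1; 0]; [:: 1; (-1); 1]; [:: 0; 2; 1]].
Definition v0 (t : 'I_8) (s : 'I_3) : int := nth 0 (nth [::] rays0 t) s.
Lemma v0_0_0 : v0 o0 i0 = (-1). Proof. reflexivity. Qed.
Lemma v0_0_1 : v0 o0 i1 = 2. Proof. reflexivity. Qed.
Lemma v0_0_2 : v0 o0 i2 = 0. Proof. reflexivity. Qed.
Lemma v0_1_0 : v0 o1 i0 = (-1). Proof. reflexivity. Qed.
Lemma v0_1_1 : v0 o1 i1 = 1. Proof. reflexivity. Qed.
Lemma v0_1_2 : v0 o1 i2 = (-1). Proof. reflexivity. Qed.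
Lemma v0_2_0 : v0 o2 i0 = 0. Proof. reflexivity. Qed.
Lemma v0_2_1 : v0 o2 i1 = (-1). Proof. reflexivity. Qed.
Lemma v0_2_2 : v0 o2 i2 = (-1). Proof. reflexivity. Qed.
Lemma v0_3_0 : v0 o3 i0 = 2. Proof. reflexivity. Qed.
Lemma v0_3_1 : v0 o3 i1 = (-1). Proof. reflexivity. Qed.
Lemma v0_3_2 : v0 o3 i2 = 2. Proof. reflexivity. Qed.
Lemma v0_4_0 : v0 o4 i0 = 0. Proof. reflexivity. Qed.
Lemma v0_4_1 : v0 o4 i1 = (-1). Proof. reflexivity. Qed.
Lemma v0_4_2 : v0 o4 i2 = 0. Proof. reflexivity. Qed.
Lemma v0_5_0 : v0 o5 i0 = (-1). Proof. reflexivity. Qed.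
Lemma v0_5_1 : v0 o5 i1 = 1. Proof. reflexivity. Qed.
Lemma v0_5_2 : v0 o5 i2 = 0. Proof. reflexivity. Qed.
Lemma v0_6_0 : v0 o6 i0 = 1. Proof. reflexivity. Qed.
Lemma v0_6_1 : v0 o6 i1 = (-1). Proof. reflexivity. Qed.
Lemma v0_6_2 : v0 o6 i2 = 1. Proof. reflexivity. Qed.
Lemma v0_7_0 : v0 o7 i0 = 0. Proof. reflexivity. Qed.
Lemma v0_7_1 : v0 o7 i1 = 2. Proof. reflexivity. Qed.
Lemma v0_7_2 : v0 o7 i2 = 1. Proof. reflexivity. Qed.
Definition v0E := (v0_0_0, v0_0_1, v0_0_2, v0_1_0, v0_1_1, v0_1_2, v0_2_0, v0_2_1, v0_2_2, v0_3_0, v0_3_1, v0_3_2, v0_4_0, v0_4_1, v0_4_2, v0_5_0, v0_5_1, v0_5_2, v0_6_0, v0_6_1, v0_6_2, v0_7_0, v0_7_1, v0_7_2).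
Lemma vq0_0_0 : vq v0 o0 i0 = (-1). Proof. by rewrite /vq v0_0_0. Qed.
Lemma vq0_0_1 : vq v0 o0 i1 = 2. Proof. by rewrite /vq v0_0_1. Qed.
Lemma vq0_0_2 : vq v0 o0 i2 = 0. Proof. by rewrite /vq v0_0_2. Qed.
Lemma vq0_1_0 : vq v0 o1 i0 = (-1). Proof. by rewrite /vq v0_1_0. Qed.
Lemma vq0_1_1 : vq v0 o1 i1 = 1. Proof. by rewrite /vq v0_1_1. Qed.
Lemma vq0_1_2 : vq v0 o1 i2 = (-1). Proof. by rewrite /vq v0_1_2. Qed.
Lemma vq0_2_0 : vq v0 o2 i0 = 0. Proof. by rewrite /vq v0_2_0. Qed.
Lemma vq0_2_1 : vq v0 o2 i1 = (-1). Proof. by rewrite /vq v0_2_1. Qed.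
Lemma vq0_2_2 : vq v0 o2 i2 = (-1). Proof. by rewrite /vq v0_2_2. Qed.
Lemma vq0_3_0 : vq v0 o3 i0 = 2. Proof. by rewrite /vq v0_3_0. Qed.
Lemma vq0_3_1 : vq v0 o3 i1 = (-1). Proof. by rewrite /vq v0_3_1. Qed.
Lemma vq0_3_2 : vq v0 o3 i2 = 2. Proof. by rewrite /vq v0_3_2. Qed.
Lemma vq0_4_0 : vq v0 o4 i0 = 0. Proof. by rewrite /vq v0_4_0. Qed.
Lemma vq0_4_1 : vq v0 o4 i1 = (-1). Proof. by rewrite /vq v0_4_1. Qed.
Lemma vq0_4_2 : vq v0 o4 i2 = 0. Proof. by rewrite /vq v0_4_2. Qed.
Lemma vq0_5_0 : vq v0 o5 i0 = (-1). Proof. by rewrite /vq v0_5_0. Qed.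
Lemma vq0_5_1 : vq v0 o5 i1 = 1. Proof. by rewrite /vq v0_5_1. Qed.
Lemma vq0_5_2 : vq v0 o5 i2 = 0. Proof. by rewrite /vq v0_5_2. Qed.
Lemma vq0_6_0 : vq v0 o6 i0 = 1. Proof. by rewrite /vq v0_6_0. Qed.
Lemma vq0_6_1 : vq v0 o6 i1 = (-1). Proof. by rewrite /vq v0_6_1. Qed.
Lemma vq0_6_2 : vq v0 o6 i2 = 1. Proof. by rewrite /vq v0_6_2. Qed.
Lemma vq0_7_0 : vq v0 o7 i0 = 0. Proof. by rewrite /vq v0_7_0. Qed.
Lemma vq0_7_1 : vq v0 o7 i1 = 2. Proof. by rewrite /vq v0_7_1. Qed.
Lemma vq0_7_2 : vq v0 o7 i2 = 1. Proof. by rewrite /vq v0_7_2. Qed.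
Definition vq0E := (vq0_0_0, vq0_0_1, vq0_0_2, vq0_1_0, vq0_1_1, vq0_1_2, vq0_2_0, vq0_2_1, vq0_2_2, vq0_3_0, vq0_3_1, vq0_3_2, vq0_4_0, vq0_4_1, vq0_4_2, vq0_5_0, vq0_5_1, vq0_5_2, vq0_6_0, vq0_6_1, vq0_6_2, vq0_7_0, vq0_7_1, vq0_7_2).
Definition L0 : seq ('I_8 * 'I_8 * 'I_8) := [:: (o0, o1, o5); (o0, o1, o7); (o0, o5, o7); (o1, o2, o3); (o1, o2, o5); (o1, o3, o7); (o2, o3, o6); (o2, o4, o5); (o2, o4, o6); (o3, o6, o7); (o4, o5, o7); (o4, o6, o7)].
Definition mkc (p : 'I_8 * 'I_8 * 'I_8) : {set 'I_8} := [set p.1.1; p.1.2; p.2].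
Definition C0 : {set {set 'I_8}} := [set:: map mkc L0].
Definition ords8 : seq 'I_8 := [:: o0; o1; o2; o3; o4; o5; o6; o7].
Definition mem3 (t : 'I_8) (p : 'I_8 * 'I_8 * 'I_8) : bool := (t == p.1.1) || (t == p.1.2) || (t == p.2).
Lemma mem3E t p : (t \in mkc p) = mem3 t p. Proof. by rewrite !inE. Qed.
Lemma ords8P (t : 'I_8) : t \in ords8.
Proof. by case: t => [[|[|[|[|[|[|[|[|m]]]]]]]] H]. Qed.
Lemma C0P c : c \in C0 -> exists2 p, p \in L0 & c = mkc p.
Proof. by rewrite inE => /mapP. Qed.
Lemma mkc_in p : p \in L0 -> mkc p \in C0.
Proof. by move=> pL; rewrite inE; apply: map_f. Qed.

Lemma smooth0b : all (fun p => (det3 (v0 p.1.1) (v0 p.1.2) (v0 p.2) == 1) ||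
   (det3 (v0 p.1.1) (v0 p.1.2) (v0 p.2) == -1)) L0.
Proof. by vm_compute. Qed.
Lemma smooth0 c : c \in C0 -> exists i j k : 'I_8,
  c = [set i; j; k] /\ (\det (mx3 v0 i j k) = 1 \/ \det (mx3 v0 i j k) = -1).
Proof.
move=> /C0P[p pL ->]; exists p.1.1, p.1.2, p.2; split => //; rewrite detmx3E.
by have := allP smooth0b p pL; case/orP => /eqP ->; [left|right].
Qed.

Lemma inj0b : all (fun x => all (fun y => (x == y) ||
   ((v0 x i0, v0 x i1, v0 x i2) != (v0 y i0, v0 y i1, v0 y i2))) ords8) ords8.
Proof. by vm_compute. Qed.
Lemma inj0 : injective v0.
Proof.
move=> x y E; have := allP (allP inj0b x (ords8P x)) y (ords8P y).
by rewrite E eqxx orbF => /eqP.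
Qed.

Lemma rays0b : all (fun t => has (mem3 t) L0) ords8.
Proof. by vm_compute. Qed.
Lemma rays0P t : exists c, c \in C0 /\ t \in c.
Proof.
have /hasP[p pL tp] := allP rays0b t (ords8P t).
by exists (mkc p); rewrite mkc_in // mem3E.
Qed.

Definition sepT : seq (int * int * int) := [:: (0, 0, 0); ((-2), (-1), 1); (0, 0, (-1)); ((-1), 0, 1); (1, 1, 0); ((-3), (-1), 2); ((-1), 0, 0); (1, 1, (-1)); ((-1), 0, 0); ((-1), 0, 0); (1, 1, (-2)); ((-1), 0, 0); (2, 1, (-1)); (0, 0, 0); (2, 1, (-2)); ((-1), 0, 1); (1, 1, 0); ((-3), (-1), 2); (0, 1, 0); (1, 1, (-1)); (0, 1, 0); ((-1), 0, 0); (1, 1, (-2)); ((-1), 0, 0); (0, 0, 1); ((-2), (-1), 2); (0, 0, 0); ((-1), 0, 1); (1, 1, 0); ((-3), (-1), 2); (0, 1, 0); (1, 1, 0); (0, 1, 0); ((-1), 0, 0); (1, 1, (-2)); ((-1), 0, 0); (3, 1, (-2)); (3, 1, (-2)); (8, 3, (-6)); (0, 0, 0); (2, 1, (-1)); (1, 0, (-1)); (3, 2, (-2)); (5, 3, (-3)); (5, 3, (-3)); (5, 2, (-4)); (8, 3, (-6)); (8, 3, (-6)); ((-1), (-1), 0); ((-3), (-2), 1); (0, 0, (-1)); ((-2), (-1), 1); (0, 0, 0); ((-3), (-2), 1); ((-1), 0, 0); (1, 1, (-1)); ((-1), 0, 0); ((-1), 0, (-1)); (0, 0, (-1)); ((-1),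 0, (-1)); (2, 1, (-1)); (3, 1, (-2)); (8, 3, (-6)); ((-1), 0, 1); (1, 1, 0); (0, 0, 0); (0, 2, 1); (3, 3, (-1)); (0, 3, 2); (5, 2, (-4)); (8, 3, (-6)); (8, 3, (-6)); (0, (-1), 0); (0, (-1), 0); (0, (-1), 0); ((-3), (-2), 2); (1, 0, 0); ((-1), (-2), 0); (0, 0, 0); (1, 0, 0); (2, 1, (-1)); (1, 0, (-1)); (2, 0, (-1)); (3, 1, (-2)); ((-1), (-1), 0); ((-3), (-2), 1); ((-1), (-1), 0); ((-2), (-1), 1); ((-1), (-1), 1); ((-3), (-2), 1); ((-2), (-1), 1); (0, 0, 0); ((-1), 0, 0); ((-2), (-1), 0); (0, 0, (-1)); ((-1), 0, (-1)); (0, (-1), 0); (0, (-1), 0); (0, (-1), 0); ((-3), (-2), 2); (0, (-1), 1); ((-1), (-2), 0); ((-2), (-1), 1); (1, 0, 0); (0, 0, 0); ((-1), (-1), 0); (2, 0, (-1)); (1, 0, (-1)); (0, 0, 1); (1, 0, 0); (1, 0, 0); ((-6), (-2), 5); (0, 0, 1); ((-5), (-2), 4); ((-1), 0, 1); (0, 0, 1); (0, 1, 1); (0, 0, 0); (1, 0, 0); (3, 1, (-2)); ((-1), (-1), 3); ((-2), (-1), 2); ((-1), (-1), 2); ((-4), (-1), 3); ((-1), (-1), 3); ((-3), (-1), 2); ((-4), (-1), 3); (0, 0, 1); ((-1), 0, 1); ((-3), (-1), 2); (0, 0, 0); ((-1), 0, 0); (0, (-1), 3); (0, (-1), 2); (0,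 (-1), 2); ((-6), (-2), 5); (0, (-1), 3); ((-5), (-2), 4); ((-4), (-1), 3); (0, 0, 1); ((-1), 0, 1); ((-3), (-1), 2); (1, 0, 0); (0, 0, 0)].
Definition sepf p q := nth (0, 0, 0) sepT (index p L0 * 12 + index q L0)%N.
Definition sepb p q (m : int * int * int) :=
  all (fun t => mem3 t p ==> (0 <= dotm m (v0 t)) && ((dotm m (v0 t) == 0) ==> mem3 t q)) ords8 &&
  all (fun t => mem3 t q ==> (dotm m (v0 t) <= 0)) ords8.
Lemma fan0b : all (fun p => all (fun q => sepb p q (sepf p q)) L0) L0.
Proof. by vm_compute. Qed.
Lemma fan0 c c' : c \in C0 -> c' \in C0 -> forall x,
  in_cone v0 c x -> in_cone v0 c' x -> in_cone v0 (c :&: c') x.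
Proof.
move=> /C0P[p pL ->] /C0P[q qL ->].
have /andP[h1 h2] := allP (allP fan0b p pL) q qL.
apply: (sep_fan (m := sepf p q)) => t; rewrite !mem3E => tp.
- exact: (implyP (allP h1 t (ords8P t)) tp).
- exact: (implyP (allP h2 t (ords8P t)) tp).
Qed.

Lemma sgn_split (F : rat) : 0 <= F \/ F < 0.
Proof. by case: (lerP 0 F); [left|right]. Qed.

Lemma complete0 x : exists c, c \in C0 /\ in_cone v0 c x.
Proof.
  case: (sgn_split (1 * (x i0 0) + 1 * (x i1 0) + (-1) * (x i2 0))) => ?.
  {
    case: (sgn_split ((-1) * (x i0 0) + (-1) * (x i1 0))) => ?.
    {
      case: (sgn_split ((-2) * (x i0 0) + (-1) * (x i1 0) + 1 * (x i2 0))) => ?.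
      {
        exists (mkc (o1, o2, o5)); split; first by apply: mkc_in.
        apply: (@in_cone_of3 _ v0 (mkc (o1, o2, o5)) x o1 o2 o5 (1 * (x i0 0) + 1 * (x i1 0) + (-1) * (x i2 0)) ((-1) * (x i0 0) + (-1) * (x i1 0)) ((-2) * (x i0 0) + (-1) * (x i1 0) + 1 * (x i2 0)));
          [by []|by []|by []|lra|lra|lra|by move=> _; rewrite mem3E|by move=> _; rewrite mem3E|by move=> _; rewrite mem3E|].
        by apply: ord3P; rewrite !vq0E; ring.
      }
      exists (mkc (o1, o2, o3)); split; first by apply: mkc_in.
      apply: (@in_cone_of3 _ v0 (mkc (o1, o2, o3)) x o1 o2 o3 (3 * (x i0 0) + 2 * (x i1 0) + (-2) * (x i2 0)) (1 * (x i0 0) + (-1) * (x i2 0)) (2 * (x i0 0) + 1 * (x i1 0) + (-1) * (x i2 0)));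
        [by []|by []|by []|lra|lra|lra|by move=> _; rewrite mem3E|by move=> _; rewrite mem3E|by move=> _; rewrite mem3E|].
      by apply: ord3P; rewrite !vq0E; ring.
    }
    case: (sgn_split ((-2) * (x i0 0) + (-1) * (x i1 0) + 1 * (x i2 0))) => ?.
    {
      case: (sgn_split (2 * (x i0 0) + 1 * (x i1 0) + (-2) * (x i2 0))) => ?.
      {
        exists (mkc (o0, o1, o5)); split; first by apply: mkc_in.
        apply: (@in_cone_of3 _ v0 (mkc (o0, o1, o5)) x o0 o1 o5 (1 * (x i0 0) + 1 * (x i1 0)) ((-1) * (x i2 0)) ((-2) * (x i0 0) + (-1) * (x i1 0) + 1 * (x i2 0)));
          [by []|by []|by []|lra|lra|lra|by move=> _; rewrite mem3E|by move=> _; rewrite mem3E|by move=> _; rewrite mem3E|].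
        by apply: ord3P; rewrite !vq0E; ring.
      }
      case: (sgn_split (2 * (x i0 0) + 1 * (x i1 0) + (-1) * (x i2 0))) => ?.
      {
        case: (sgn_split (1 * (x i0 0))) => ?.
        {
          exists (mkc (o4, o5, o7)); split; first by apply: mkc_in.
          apply: (@in_cone_of3 _ v0 (mkc (o4, o5, o7)) x o4 o5 o7 ((-1) * (x i0 0) + (-1) * (x i1 0) + 2 * (x i2 0)) ((-1) * (x i0 0)) (1 * (x i2 0)));
            [by []|by []|by []|lra|lra|lra|by move=> _; rewrite mem3E|by move=> _; rewrite mem3E|by move=> _; rewrite mem3E|].
          by apply: ord3P; rewrite !vq0E; ring.
        }
        case: (sgn_split ((-1) * (x i0 0) + (-1) * (x i1 0) + 2 * (x i2 0))) => ?.
        {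
          exists (mkc (o4, o5, o7)); split; first by apply: mkc_in.
          apply: (@in_cone_of3 _ v0 (mkc (o4, o5, o7)) x o4 o5 o7 ((-1) * (x i0 0) + (-1) * (x i1 0) + 2 * (x i2 0)) ((-1) * (x i0 0)) (1 * (x i2 0)));
            [by []|by []|by []|lra|lra|lra|by move=> _; rewrite mem3E|by move=> _; rewrite mem3E|by move=> _; rewrite mem3E|].
          by apply: ord3P; rewrite !vq0E; ring.
        }
        exists (mkc (o0, o5, o7)); split; first by apply: mkc_in.
        apply: (@in_cone_of3 _ v0 (mkc (o0, o5, o7)) x o0 o5 o7 (1 * (x i0 0) + 1 * (x i1 0) + (-2) * (x i2 0)) ((-2) * (x i0 0) + (-1) * (x i1 0) + 2 * (x i2 0)) (1 * (x i2 0)));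
          [by []|by []|by []|lra|lra|lra|by move=> _; rewrite mem3E|by move=> _; rewrite mem3E|by move=> _; rewrite mem3E|].
        by apply: ord3P; rewrite !vq0E; ring.
      }
      case: (sgn_split (3 * (x i0 0) + 2 * (x i1 0) + (-2) * (x i2 0))) => ?.
      {
        case: (sgn_split ((-1) * (x i0 0) + (-1) * (x i1 0) + 2 * (x i2 0))) => ?.
        {
          exists (mkc (o4, o5, o7)); split; first by apply: mkc_in.
          apply: (@in_cone_of3 _ v0 (mkc (o4, o5, o7)) x o4 o5 o7 ((-1) * (x i0 0) + (-1) * (x i1 0) + 2 * (x i2 0)) ((-1) * (x i0 0)) (1 * (x i2 0)));
            [by []|by []|by []|lra|lra|lra|by move=> _; rewrite mem3E|by move=> _; rewrite mem3E|by move=> _; rewrite mem3E|].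
          by apply: ord3P; rewrite !vq0E; ring.
        }
        case: (sgn_split (1 * (x i2 0))) => ?.
        {
          exists (mkc (o0, o5, o7)); split; first by apply: mkc_in.
          apply: (@in_cone_of3 _ v0 (mkc (o0, o5, o7)) x o0 o5 o7 (1 * (x i0 0) + 1 * (x i1 0) + (-2) * (x i2 0)) ((-2) * (x i0 0) + (-1) * (x i1 0) + 2 * (x i2 0)) (1 * (x i2 0)));
            [by []|by []|by []|lra|lra|lra|by move=> _; rewrite mem3E|by move=> _; rewrite mem3E|by move=> _; rewrite mem3E|].
          by apply: ord3P; rewrite !vq0E; ring.
        }
        exists (mkc (o0, o1, o5)); split; first by apply: mkc_in.
        apply: (@in_cone_of3 _ v0 (mkc (o0, o1, o5)) x o0 o1 o5 (1 * (x i0 0) + 1 * (x i1 0)) ((-1) * (x i2 0)) ((-2) * (x i0 0) + (-1) * (x i1 0) + 1 * (x i2 0)));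
          [by []|by []|by []|lra|lra|lra|by move=> _; rewrite mem3E|by move=> _; rewrite mem3E|by move=> _; rewrite mem3E|].
        by apply: ord3P; rewrite !vq0E; ring.
      }
      case: (sgn_split ((-1) * (x i0 0) + (-1) * (x i1 0) + 2 * (x i2 0))) => ?.
      {
        exists (mkc (o4, o5, o7)); split; first by apply: mkc_in.
        apply: (@in_cone_of3 _ v0 (mkc (o4, o5, o7)) x o4 o5 o7 ((-1) * (x i0 0) + (-1) * (x i1 0) + 2 * (x i2 0)) ((-1) * (x i0 0)) (1 * (x i2 0)));
          [by []|by []|by []|lra|lra|lra|by move=> _; rewrite mem3E|by move=> _; rewrite mem3E|by move=> _; rewrite mem3E|].
        by apply: ord3P; rewrite !vq0E; ring.
      }
      case: (sgn_split (1 * (x i2 0))) => ?.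
      {
        exists (mkc (o0, o5, o7)); split; first by apply: mkc_in.
        apply: (@in_cone_of3 _ v0 (mkc (o0, o5, o7)) x o0 o5 o7 (1 * (x i0 0) + 1 * (x i1 0) + (-2) * (x i2 0)) ((-2) * (x i0 0) + (-1) * (x i1 0) + 2 * (x i2 0)) (1 * (x i2 0)));
          [by []|by []|by []|lra|lra|lra|by move=> _; rewrite mem3E|by move=> _; rewrite mem3E|by move=> _; rewrite mem3E|].
        by apply: ord3P; rewrite !vq0E; ring.
      }
      exists (mkc (o0, o1, o5)); split; first by apply: mkc_in.
      apply: (@in_cone_of3 _ v0 (mkc (o0, o1, o5)) x o0 o1 o5 (1 * (x i0 0) + 1 * (x i1 0)) ((-1) * (x i2 0)) ((-2) * (x i0 0) + (-1) * (x i1 0) + 1 * (x i2 0)));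
        [by []|by []|by []|lra|lra|lra|by move=> _; rewrite mem3E|by move=> _; rewrite mem3E|by move=> _; rewrite mem3E|].
      by apply: ord3P; rewrite !vq0E; ring.
    }
    case: (sgn_split ((-3) * (x i0 0) + (-1) * (x i1 0) + 2 * (x i2 0))) => ?.
    {
      case: (sgn_split (2 * (x i0 0) + 1 * (x i1 0) + (-2) * (x i2 0))) => ?.
      {
        exists (mkc (o0, o1, o7)); split; first by apply: mkc_in.
        apply: (@in_cone_of3 _ v0 (mkc (o0, o1, o7)) x o0 o1 o7 ((-3) * (x i0 0) + (-1) * (x i1 0) + 2 * (x i2 0)) (2 * (x i0 0) + 1 * (x i1 0) + (-2) * (x i2 0)) (2 * (x i0 0) + 1 * (x i1 0) + (-1) * (x i2 0)));
          [by []|by []|by []|lra|lra|lra|by move=> _; rewrite mem3E|by move=> _; rewrite mem3E|by move=> _; rewrite mem3E|].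
        by apply: ord3P; rewrite !vq0E; ring.
      }
      case: (sgn_split (1 * (x i0 0))) => ?.
      {
        exists (mkc (o4, o6, o7)); split; first by apply: mkc_in.
        apply: (@in_cone_of3 _ v0 (mkc (o4, o6, o7)) x o4 o6 o7 ((-3) * (x i0 0) + (-1) * (x i1 0) + 2 * (x i2 0)) (1 * (x i0 0)) ((-1) * (x i0 0) + 1 * (x i2 0)));
          [by []|by []|by []|lra|lra|lra|by move=> _; rewrite mem3E|by move=> _; rewrite mem3E|by move=> _; rewrite mem3E|].
        by apply: ord3P; rewrite !vq0E; ring.
      }
      case: (sgn_split ((-1) * (x i0 0) + (-1) * (x i1 0) + 2 * (x i2 0))) => ?.
      {
        exists (mkc (o4, o5, o7)); split; first by apply: mkc_in.
        apply: (@in_cone_of3 _ v0 (mkc (o4, o5, o7)) x o4 o5 o7 ((-1) * (x i0 0) + (-1) * (x i1 0) + 2 * (x i2 0)) ((-1) * (x i0 0)) (1 * (x i2 0)));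
          [by []|by []|by []|lra|lra|lra|by move=> _; rewrite mem3E|by move=> _; rewrite mem3E|by move=> _; rewrite mem3E|].
        by apply: ord3P; rewrite !vq0E; ring.
      }
      exists (mkc (o0, o5, o7)); split; first by apply: mkc_in.
      apply: (@in_cone_of3 _ v0 (mkc (o0, o5, o7)) x o0 o5 o7 (1 * (x i0 0) + 1 * (x i1 0) + (-2) * (x i2 0)) ((-2) * (x i0 0) + (-1) * (x i1 0) + 2 * (x i2 0)) (1 * (x i2 0)));
        [by []|by []|by []|lra|lra|lra|by move=> _; rewrite mem3E|by move=> _; rewrite mem3E|by move=> _; rewrite mem3E|].
      by apply: ord3P; rewrite !vq0E; ring.
    }
    case: (sgn_split (2 * (x i0 0) + 1 * (x i1 0) + (-2) * (x i2 0))) => ?.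
    {
      case: (sgn_split (1 * (x i0 0) + (-1) * (x i2 0))) => ?.
      {
        exists (mkc (o1, o2, o3)); split; first by apply: mkc_in.
        apply: (@in_cone_of3 _ v0 (mkc (o1, o2, o3)) x o1 o2 o3 (3 * (x i0 0) + 2 * (x i1 0) + (-2) * (x i2 0)) (1 * (x i0 0) + (-1) * (x i2 0)) (2 * (x i0 0) + 1 * (x i1 0) + (-1) * (x i2 0)));
          [by []|by []|by []|lra|lra|lra|by move=> _; rewrite mem3E|by move=> _; rewrite mem3E|by move=> _; rewrite mem3E|].
        by apply: ord3P; rewrite !vq0E; ring.
      }
      exists (mkc (o1, o3, o7)); split; first by apply: mkc_in.
      apply: (@in_cone_of3 _ v0 (mkc (o1, o3, o7)) x o1 o3 o7 (5 * (x i0 0) + 2 * (x i1 0) + (-4) * (x i2 0)) (3 * (x i0 0) + 1 * (x i1 0) + (-2) * (x i2 0)) ((-1) * (x i0 0) + 1 * (x i2 0)));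
        [by []|by []|by []|lra|lra|lra|by move=> _; rewrite mem3E|by move=> _; rewrite mem3E|by move=> _; rewrite mem3E|].
      by apply: ord3P; rewrite !vq0E; ring.
    }
    case: (sgn_split (5 * (x i0 0) + 2 * (x i1 0) + (-4) * (x i2 0))) => ?.
    {
      exists (mkc (o1, o3, o7)); split; first by apply: mkc_in.
      apply: (@in_cone_of3 _ v0 (mkc (o1, o3, o7)) x o1 o3 o7 (5 * (x i0 0) + 2 * (x i1 0) + (-4) * (x i2 0)) (3 * (x i0 0) + 1 * (x i1 0) + (-2) * (x i2 0)) ((-1) * (x i0 0) + 1 * (x i2 0)));
        [by []|by []|by []|lra|lra|lra|by move=> _; rewrite mem3E|by move=> _; rewrite mem3E|by move=> _; rewrite mem3E|].
      by apply: ord3P; rewrite !vq0E; ring.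
    }
    exists (mkc (o3, o6, o7)); split; first by apply: mkc_in.
    apply: (@in_cone_of3 _ v0 (mkc (o3, o6, o7)) x o3 o6 o7 (3 * (x i0 0) + 1 * (x i1 0) + (-2) * (x i2 0)) ((-5) * (x i0 0) + (-2) * (x i1 0) + 4 * (x i2 0)) ((-1) * (x i0 0) + 1 * (x i2 0)));
      [by []|by []|by []|lra|lra|lra|by move=> _; rewrite mem3E|by move=> _; rewrite mem3E|by move=> _; rewrite mem3E|].
    by apply: ord3P; rewrite !vq0E; ring.
  }
  case: (sgn_split ((-1) * (x i0 0) + (-1) * (x i1 0))) => ?.
  {
    case: (sgn_split ((-2) * (x i0 0) + (-1) * (x i1 0) + 1 * (x i2 0))) => ?.
    {
      case: (sgn_split ((-3) * (x i0 0) + (-1) * (x i1 0) + 2 * (x i2 0))) => ?.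
      {
        case: (sgn_split (2 * (x i0 0) + 1 * (x i1 0) + (-2) * (x i2 0))) => ?.
        {
          exists (mkc (o2, o4, o5)); split; first by apply: mkc_in.
          apply: (@in_cone_of3 _ v0 (mkc (o2, o4, o5)) x o2 o4 o5 ((-1) * (x i2 0)) ((-1) * (x i0 0) + (-1) * (x i1 0) + 1 * (x i2 0)) ((-1) * (x i0 0)));
            [by []|by []|by []|lra|lra|lra|by move=> _; rewrite mem3E|by move=> _; rewrite mem3E|by move=> _; rewrite mem3E|].
          by apply: ord3P; rewrite !vq0E; ring.
        }
        case: (sgn_split (2 * (x i0 0) + 1 * (x i1 0) + (-1) * (x i2 0))) => ?.
        {
          exists (mkc (o2, o3, o6)); split; first by apply: mkc_in.
          apply: (@in_cone_of3 _ v0 (mkc (o2, o3, o6)) x o2 o3 o6 (1 * (x i0 0) + (-1) * (x i2 0)) (2 * (x i0 0) + 1 * (x i1 0) + (-1) * (x i2 0)) ((-3) * (x i0 0) + (-2) * (x i1 0) + 2 * (x i2 0)));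
            [by []|by []|by []|lra|lra|lra|by move=> _; rewrite mem3E|by move=> _; rewrite mem3E|by move=> _; rewrite mem3E|].
          by apply: ord3P; rewrite !vq0E; ring.
        }
        case: (sgn_split (1 * (x i0 0) + (-1) * (x i2 0))) => ?.
        {
          case: (sgn_split (1 * (x i0 0))) => ?.
          {
            exists (mkc (o2, o4, o6)); split; first by apply: mkc_in.
            apply: (@in_cone_of3 _ v0 (mkc (o2, o4, o6)) x o2 o4 o6 (1 * (x i0 0) + (-1) * (x i2 0)) ((-2) * (x i0 0) + (-1) * (x i1 0) + 1 * (x i2 0)) (1 * (x i0 0)));
              [by []|by []|by []|lra|lra|lra|by move=> _; rewrite mem3E|by move=> _; rewrite mem3E|by move=> _; rewrite mem3E|].
            by apply: ord3P; rewrite !vq0E; ring.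
          }
          exists (mkc (o2, o4, o5)); split; first by apply: mkc_in.
          apply: (@in_cone_of3 _ v0 (mkc (o2, o4, o5)) x o2 o4 o5 ((-1) * (x i2 0)) ((-1) * (x i0 0) + (-1) * (x i1 0) + 1 * (x i2 0)) ((-1) * (x i0 0)));
            [by []|by []|by []|lra|lra|lra|by move=> _; rewrite mem3E|by move=> _; rewrite mem3E|by move=> _; rewrite mem3E|].
          by apply: ord3P; rewrite !vq0E; ring.
        }
        case: (sgn_split (1 * (x i0 0))) => ?.
        {
          exists (mkc (o4, o6, o7)); split; first by apply: mkc_in.
          apply: (@in_cone_of3 _ v0 (mkc (o4, o6, o7)) x o4 o6 o7 ((-3) * (x i0 0) + (-1) * (x i1 0) + 2 * (x i2 0)) (1 * (x i0 0)) ((-1) * (x i0 0) + 1 * (x i2 0)));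
            [by []|by []|by []|lra|lra|lra|by move=> _; rewrite mem3E|by move=> _; rewrite mem3E|by move=> _; rewrite mem3E|].
          by apply: ord3P; rewrite !vq0E; ring.
        }
        case: (sgn_split ((-1) * (x i0 0) + (-1) * (x i1 0) + 2 * (x i2 0))) => ?.
        {
          case: (sgn_split (1 * (x i2 0))) => ?.
          {
            exists (mkc (o4, o5, o7)); split; first by apply: mkc_in.
            apply: (@in_cone_of3 _ v0 (mkc (o4, o5, o7)) x o4 o5 o7 ((-1) * (x i0 0) + (-1) * (x i1 0) + 2 * (x i2 0)) ((-1) * (x i0 0)) (1 * (x i2 0)));
              [by []|by []|by []|lra|lra|lra|by move=> _; rewrite mem3E|by move=> _; rewrite mem3E|by move=> _; rewrite mem3E|].
            by apply: ord3P; rewrite !vq0E; ring.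
          }
          exists (mkc (o2, o4, o5)); split; first by apply: mkc_in.
          apply: (@in_cone_of3 _ v0 (mkc (o2, o4, o5)) x o2 o4 o5 ((-1) * (x i2 0)) ((-1) * (x i0 0) + (-1) * (x i1 0) + 1 * (x i2 0)) ((-1) * (x i0 0)));
            [by []|by []|by []|lra|lra|lra|by move=> _; rewrite mem3E|by move=> _; rewrite mem3E|by move=> _; rewrite mem3E|].
          by apply: ord3P; rewrite !vq0E; ring.
        }
        exists (mkc (o2, o4, o5)); split; first by apply: mkc_in.
        apply: (@in_cone_of3 _ v0 (mkc (o2, o4, o5)) x o2 o4 o5 ((-1) * (x i2 0)) ((-1) * (x i0 0) + (-1) * (x i1 0) + 1 * (x i2 0)) ((-1) * (x i0 0)));
          [by []|by []|by []|lra|lra|lra|by move=> _; rewrite mem3E|by move=> _; rewrite mem3E|by move=> _; rewrite mem3E|].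
        by apply: ord3P; rewrite !vq0E; ring.
      }
      case: (sgn_split (2 * (x i0 0) + 1 * (x i1 0) + (-2) * (x i2 0))) => ?.
      {
        case: (sgn_split (2 * (x i0 0) + 1 * (x i1 0) + (-1) * (x i2 0))) => ?.
        {
          exists (mkc (o2, o3, o6)); split; first by apply: mkc_in.
          apply: (@in_cone_of3 _ v0 (mkc (o2, o3, o6)) x o2 o3 o6 (1 * (x i0 0) + (-1) * (x i2 0)) (2 * (x i0 0) + 1 * (x i1 0) + (-1) * (x i2 0)) ((-3) * (x i0 0) + (-2) * (x i1 0) + 2 * (x i2 0)));
            [by []|by []|by []|lra|lra|lra|by move=> _; rewrite mem3E|by move=> _; rewrite mem3E|by move=> _; rewrite mem3E|].
          by apply: ord3P; rewrite !vq0E; ring.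
        }
        case: (sgn_split (1 * (x i0 0))) => ?.
        {
          exists (mkc (o2, o4, o6)); split; first by apply: mkc_in.
          apply: (@in_cone_of3 _ v0 (mkc (o2, o4, o6)) x o2 o4 o6 (1 * (x i0 0) + (-1) * (x i2 0)) ((-2) * (x i0 0) + (-1) * (x i1 0) + 1 * (x i2 0)) (1 * (x i0 0)));
            [by []|by []|by []|lra|lra|lra|by move=> _; rewrite mem3E|by move=> _; rewrite mem3E|by move=> _; rewrite mem3E|].
          by apply: ord3P; rewrite !vq0E; ring.
        }
        exists (mkc (o2, o4, o5)); split; first by apply: mkc_in.
        apply: (@in_cone_of3 _ v0 (mkc (o2, o4, o5)) x o2 o4 o5 ((-1) * (x i2 0)) ((-1) * (x i0 0) + (-1) * (x i1 0) + 1 * (x i2 0)) ((-1) * (x i0 0)));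
          [by []|by []|by []|lra|lra|lra|by move=> _; rewrite mem3E|by move=> _; rewrite mem3E|by move=> _; rewrite mem3E|].
        by apply: ord3P; rewrite !vq0E; ring.
      }
      exists (mkc (o2, o4, o6)); split; first by apply: mkc_in.
      apply: (@in_cone_of3 _ v0 (mkc (o2, o4, o6)) x o2 o4 o6 (1 * (x i0 0) + (-1) * (x i2 0)) ((-2) * (x i0 0) + (-1) * (x i1 0) + 1 * (x i2 0)) (1 * (x i0 0)));
        [by []|by []|by []|lra|lra|lra|by move=> _; rewrite mem3E|by move=> _; rewrite mem3E|by move=> _; rewrite mem3E|].
      by apply: ord3P; rewrite !vq0E; ring.
    }
    case: (sgn_split (2 * (x i0 0) + 1 * (x i1 0) + (-2) * (x i2 0))) => ?.
    {
      case: (sgn_split (3 * (x i0 0) + 2 * (x i1 0) + (-2) * (x i2 0))) => ?.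
      {
        exists (mkc (o1, o2, o3)); split; first by apply: mkc_in.
        apply: (@in_cone_of3 _ v0 (mkc (o1, o2, o3)) x o1 o2 o3 (3 * (x i0 0) + 2 * (x i1 0) + (-2) * (x i2 0)) (1 * (x i0 0) + (-1) * (x i2 0)) (2 * (x i0 0) + 1 * (x i1 0) + (-1) * (x i2 0)));
          [by []|by []|by []|lra|lra|lra|by move=> _; rewrite mem3E|by move=> _; rewrite mem3E|by move=> _; rewrite mem3E|].
        by apply: ord3P; rewrite !vq0E; ring.
      }
      exists (mkc (o2, o3, o6)); split; first by apply: mkc_in.
      apply: (@in_cone_of3 _ v0 (mkc (o2, o3, o6)) x o2 o3 o6 (1 * (x i0 0) + (-1) * (x i2 0)) (2 * (x i0 0) + 1 * (x i1 0) + (-1) * (x i2 0)) ((-3) * (x i0 0) + (-2) * (x i1 0) + 2 * (x i2 0)));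
        [by []|by []|by []|lra|lra|lra|by move=> _; rewrite mem3E|by move=> _; rewrite mem3E|by move=> _; rewrite mem3E|].
      by apply: ord3P; rewrite !vq0E; ring.
    }
    exists (mkc (o2, o3, o6)); split; first by apply: mkc_in.
    apply: (@in_cone_of3 _ v0 (mkc (o2, o3, o6)) x o2 o3 o6 (1 * (x i0 0) + (-1) * (x i2 0)) (2 * (x i0 0) + 1 * (x i1 0) + (-1) * (x i2 0)) ((-3) * (x i0 0) + (-2) * (x i1 0) + 2 * (x i2 0)));
      [by []|by []|by []|lra|lra|lra|by move=> _; rewrite mem3E|by move=> _; rewrite mem3E|by move=> _; rewrite mem3E|].
    by apply: ord3P; rewrite !vq0E; ring.
  }
  case: (sgn_split ((-2) * (x i0 0) + (-1) * (x i1 0) + 1 * (x i2 0))) => ?.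
  {
    case: (sgn_split (2 * (x i0 0) + 1 * (x i1 0) + (-1) * (x i2 0))) => ?.
    {
      exists (mkc (o4, o6, o7)); split; first by apply: mkc_in.
      apply: (@in_cone_of3 _ v0 (mkc (o4, o6, o7)) x o4 o6 o7 ((-3) * (x i0 0) + (-1) * (x i1 0) + 2 * (x i2 0)) (1 * (x i0 0)) ((-1) * (x i0 0) + 1 * (x i2 0)));
        [by []|by []|by []|lra|lra|lra|by move=> _; rewrite mem3E|by move=> _; rewrite mem3E|by move=> _; rewrite mem3E|].
      by apply: ord3P; rewrite !vq0E; ring.
    }
    case: (sgn_split (1 * (x i0 0))) => ?.
    {
      exists (mkc (o4, o6, o7)); split; first by apply: mkc_in.
      apply: (@in_cone_of3 _ v0 (mkc (o4, o6, o7)) x o4 o6 o7 ((-3) * (x i0 0) + (-1) * (x i1 0) + 2 * (x i2 0)) (1 * (x i0 0)) ((-1) * (x i0 0) + 1 * (x i2 0)));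
        [by []|by []|by []|lra|lra|lra|by move=> _; rewrite mem3E|by move=> _; rewrite mem3E|by move=> _; rewrite mem3E|].
      by apply: ord3P; rewrite !vq0E; ring.
    }
    exists (mkc (o4, o5, o7)); split; first by apply: mkc_in.
    apply: (@in_cone_of3 _ v0 (mkc (o4, o5, o7)) x o4 o5 o7 ((-1) * (x i0 0) + (-1) * (x i1 0) + 2 * (x i2 0)) ((-1) * (x i0 0)) (1 * (x i2 0)));
      [by []|by []|by []|lra|lra|lra|by move=> _; rewrite mem3E|by move=> _; rewrite mem3E|by move=> _; rewrite mem3E|].
    by apply: ord3P; rewrite !vq0E; ring.
  }
  case: (sgn_split ((-3) * (x i0 0) + (-1) * (x i1 0) + 2 * (x i2 0))) => ?.
  {
    exists (mkc (o4, o6, o7)); split; first by apply: mkc_in.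
    apply: (@in_cone_of3 _ v0 (mkc (o4, o6, o7)) x o4 o6 o7 ((-3) * (x i0 0) + (-1) * (x i1 0) + 2 * (x i2 0)) (1 * (x i0 0)) ((-1) * (x i0 0) + 1 * (x i2 0)));
      [by []|by []|by []|lra|lra|lra|by move=> _; rewrite mem3E|by move=> _; rewrite mem3E|by move=> _; rewrite mem3E|].
    by apply: ord3P; rewrite !vq0E; ring.
  }
  case: (sgn_split (2 * (x i0 0) + 1 * (x i1 0) + (-2) * (x i2 0))) => ?.
  {
    exists (mkc (o1, o2, o3)); split; first by apply: mkc_in.
    apply: (@in_cone_of3 _ v0 (mkc (o1, o2, o3)) x o1 o2 o3 (3 * (x i0 0) + 2 * (x i1 0) + (-2) * (x i2 0)) (1 * (x i0 0) + (-1) * (x i2 0)) (2 * (x i0 0) + 1 * (x i1 0) + (-1) * (x i2 0)));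
      [by []|by []|by []|lra|lra|lra|by move=> _; rewrite mem3E|by move=> _; rewrite mem3E|by move=> _; rewrite mem3E|].
    by apply: ord3P; rewrite !vq0E; ring.
  }
  case: (sgn_split (3 * (x i0 0) + 2 * (x i1 0) + (-2) * (x i2 0))) => ?.
  {
    case: (sgn_split (1 * (x i0 0) + (-1) * (x i2 0))) => ?.
    {
      exists (mkc (o1, o2, o3)); split; first by apply: mkc_in.
      apply: (@in_cone_of3 _ v0 (mkc (o1, o2, o3)) x o1 o2 o3 (3 * (x i0 0) + 2 * (x i1 0) + (-2) * (x i2 0)) (1 * (x i0 0) + (-1) * (x i2 0)) (2 * (x i0 0) + 1 * (x i1 0) + (-1) * (x i2 0)));
        [by []|by []|by []|lra|lra|lra|by move=> _; rewrite mem3E|by move=> _; rewrite mem3E|by move=> _; rewrite mem3E|].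
      by apply: ord3P; rewrite !vq0E; ring.
    }
    case: (sgn_split ((-3) * (x i0 0) + (-2) * (x i1 0) + 2 * (x i2 0))) => ?.
    {
      exists (mkc (o3, o6, o7)); split; first by apply: mkc_in.
      apply: (@in_cone_of3 _ v0 (mkc (o3, o6, o7)) x o3 o6 o7 (3 * (x i0 0) + 1 * (x i1 0) + (-2) * (x i2 0)) ((-5) * (x i0 0) + (-2) * (x i1 0) + 4 * (x i2 0)) ((-1) * (x i0 0) + 1 * (x i2 0)));
        [by []|by []|by []|lra|lra|lra|by move=> _; rewrite mem3E|by move=> _; rewrite mem3E|by move=> _; rewrite mem3E|].
      by apply: ord3P; rewrite !vq0E; ring.
    }
    case: (sgn_split (5 * (x i0 0) + 2 * (x i1 0) + (-4) * (x i2 0))) => ?.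
    {
      exists (mkc (o1, o3, o7)); split; first by apply: mkc_in.
      apply: (@in_cone_of3 _ v0 (mkc (o1, o3, o7)) x o1 o3 o7 (5 * (x i0 0) + 2 * (x i1 0) + (-4) * (x i2 0)) (3 * (x i0 0) + 1 * (x i1 0) + (-2) * (x i2 0)) ((-1) * (x i0 0) + 1 * (x i2 0)));
        [by []|by []|by []|lra|lra|lra|by move=> _; rewrite mem3E|by move=> _; rewrite mem3E|by move=> _; rewrite mem3E|].
      by apply: ord3P; rewrite !vq0E; ring.
    }
    exists (mkc (o3, o6, o7)); split; first by apply: mkc_in.
    apply: (@in_cone_of3 _ v0 (mkc (o3, o6, o7)) x o3 o6 o7 (3 * (x i0 0) + 1 * (x i1 0) + (-2) * (x i2 0)) ((-5) * (x i0 0) + (-2) * (x i1 0) + 4 * (x i2 0)) ((-1) * (x i0 0) + 1 * (x i2 0)));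
      [by []|by []|by []|lra|lra|lra|by move=> _; rewrite mem3E|by move=> _; rewrite mem3E|by move=> _; rewrite mem3E|].
    by apply: ord3P; rewrite !vq0E; ring.
  }
  case: (sgn_split (1 * (x i0 0) + (-1) * (x i2 0))) => ?.
  {
    exists (mkc (o2, o3, o6)); split; first by apply: mkc_in.
    apply: (@in_cone_of3 _ v0 (mkc (o2, o3, o6)) x o2 o3 o6 (1 * (x i0 0) + (-1) * (x i2 0)) (2 * (x i0 0) + 1 * (x i1 0) + (-1) * (x i2 0)) ((-3) * (x i0 0) + (-2) * (x i1 0) + 2 * (x i2 0)));
      [by []|by []|by []|lra|lra|lra|by move=> _; rewrite mem3E|by move=> _; rewrite mem3E|by move=> _; rewrite mem3E|].
    by apply: ord3P; rewrite !vq0E; ring.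
  }
  exists (mkc (o3, o6, o7)); split; first by apply: mkc_in.
  apply: (@in_cone_of3 _ v0 (mkc (o3, o6, o7)) x o3 o6 o7 (3 * (x i0 0) + 1 * (x i1 0) + (-2) * (x i2 0)) ((-5) * (x i0 0) + (-2) * (x i1 0) + 4 * (x i2 0)) ((-1) * (x i0 0) + 1 * (x i2 0)));
    [by []|by []|by []|lra|lra|lra|by move=> _; rewrite mem3E|by move=> _; rewrite mem3E|by move=> _; rewrite mem3E|].
  by apply: ord3P; rewrite !vq0E; ring.
Qed.
Lemma nef0 (a : 'I_8 -> int) : nef v0 C0 a -> trivial_bundle v0 a.
Proof.
move=> H.
have W0 : 0 <= a o5 + a o7 + (-2) * a o0 + 1 * a o1.
  apply: (@wall_int _ v0 C0 a (mkc (o0, o1, o5)) (mkc (o0, o1, o7)) o0 o1 o5 o7 (-2) 1 H);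
    [by apply: mkc_in; vm_compute|by apply: mkc_in; vm_compute|by rewrite mem3E; vm_compute|by rewrite mem3E; vm_compute
    |by rewrite mem3E; vm_compute|by rewrite mem3E; vm_compute|by vm_compute|by rewrite mem3E; vm_compute|by rewrite mem3E; vm_compute
    |by rewrite mem3E; vm_compute|by rewrite mem3E; vm_compute|by apply: ord3P; reflexivity].
have W1 : 0 <= a o1 + a o7 + (-2) * a o0 + 1 * a o5.
  apply: (@wall_int _ v0 C0 a (mkc (o0, o1, o5)) (mkc (o0, o5, o7)) o0 o5 o1 o7 (-2) 1 H);
    [by apply: mkc_in; vm_compute|by apply: mkc_in; vm_compute|by rewrite mem3E; vm_compute|by rewrite mem3E; vm_compute
    |by rewrite mem3E; vm_compute|by rewrite mem3E; vm_compute|by vm_compute|by rewrite mem3E; vm_compute|by rewrite mem3E; vm_compute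
    |by rewrite mem3E; vm_compute|by rewrite mem3E; vm_compute|by apply: ord3P; reflexivity].
have W2 : 0 <= a o0 + a o2 + (-1) * a o1 + 0 * a o5.
  apply: (@wall_int _ v0 C0 a (mkc (o0, o1, o5)) (mkc (o1, o2, o5)) o1 o5 o0 o2 (-1) 0 H);
    [by apply: mkc_in; vm_compute|by apply: mkc_in; vm_compute|by rewrite mem3E; vm_compute|by rewrite mem3E; vm_compute
    |by rewrite mem3E; vm_compute|by rewrite mem3E; vm_compute|by vm_compute|by rewrite mem3E; vm_compute|by rewrite mem3E; vm_compute
    |by rewrite mem3E; vm_compute|by rewrite mem3E; vm_compute|by apply: ord3P; reflexivity].
have W3 : 0 <= a o1 + a o5 + (-2) * a o0 + 1 * a o7.
  apply: (@wall_int _ v0 C0 a (mkc (o0, o1, o7)) (mkc (o0, o5, o7)) o0 o7 o1 o5 (-2) 1 H);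
    [by apply: mkc_in; vm_compute|by apply: mkc_in; vm_compute|by rewrite mem3E; vm_compute|by rewrite mem3E; vm_compute
    |by rewrite mem3E; vm_compute|by rewrite mem3E; vm_compute|by vm_compute|by rewrite mem3E; vm_compute|by rewrite mem3E; vm_compute
    |by rewrite mem3E; vm_compute|by rewrite mem3E; vm_compute|by apply: ord3P; reflexivity].
have W4 : 0 <= a o0 + a o3 + 1 * a o1 + (-1) * a o7.
  apply: (@wall_int _ v0 C0 a (mkc (o0, o1, o7)) (mkc (o1, o3, o7)) o1 o7 o0 o3 1 (-1) H);
    [by apply: mkc_in; vm_compute|by apply: mkc_in; vm_compute|by rewrite mem3E; vm_compute|by rewrite mem3E; vm_compute
    |by rewrite mem3E; vm_compute|by rewrite mem3E; vm_compute|by vm_compute|by rewrite mem3E; vm_compute|by rewrite mem3E; vm_compute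
    |by rewrite mem3E; vm_compute|by rewrite mem3E; vm_compute|by apply: ord3P; reflexivity].
have W5 : 0 <= a o0 + a o4 + (-1) * a o5 + 0 * a o7.
  apply: (@wall_int _ v0 C0 a (mkc (o0, o5, o7)) (mkc (o4, o5, o7)) o5 o7 o0 o4 (-1) 0 H);
    [by apply: mkc_in; vm_compute|by apply: mkc_in; vm_compute|by rewrite mem3E; vm_compute|by rewrite mem3E; vm_compute
    |by rewrite mem3E; vm_compute|by rewrite mem3E; vm_compute|by vm_compute|by rewrite mem3E; vm_compute|by rewrite mem3E; vm_compute
    |by rewrite mem3E; vm_compute|by rewrite mem3E; vm_compute|by apply: ord3P; reflexivity].
have W6 : 0 <= a o3 + a o5 + 1 * a o1 + 1 * a o2.
  apply: (@wall_int _ v0 C0 a (mkc (o1, o2, o3)) (mkc (o1, o2, o5)) o1 o2 o3 o5 1 1 H);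
    [by apply: mkc_in; vm_compute|by apply: mkc_in; vm_compute|by rewrite mem3E; vm_compute|by rewrite mem3E; vm_compute
    |by rewrite mem3E; vm_compute|by rewrite mem3E; vm_compute|by vm_compute|by rewrite mem3E; vm_compute|by rewrite mem3E; vm_compute
    |by rewrite mem3E; vm_compute|by rewrite mem3E; vm_compute|by apply: ord3P; reflexivity].
have W7 : 0 <= a o2 + a o7 + (-2) * a o1 + (-1) * a o3.
  apply: (@wall_int _ v0 C0 a (mkc (o1, o2, o3)) (mkc (o1, o3, o7)) o1 o3 o2 o7 (-2) (-1) H);
    [by apply: mkc_in; vm_compute|by apply: mkc_in; vm_compute|by rewrite mem3E; vm_compute|by rewrite mem3E; vm_compute
    |by rewrite mem3E; vm_compute|by rewrite mem3E; vm_compute|by vm_compute|by rewrite mem3E; vm_compute|by rewrite mem3E; vm_compute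
    |by rewrite mem3E; vm_compute|by rewrite mem3E; vm_compute|by apply: ord3P; reflexivity].
have W8 : 0 <= a o1 + a o6 + 0 * a o2 + 0 * a o3.
  apply: (@wall_int _ v0 C0 a (mkc (o1, o2, o3)) (mkc (o2, o3, o6)) o2 o3 o1 o6 0 0 H);
    [by apply: mkc_in; vm_compute|by apply: mkc_in; vm_compute|by rewrite mem3E; vm_compute|by rewrite mem3E; vm_compute
    |by rewrite mem3E; vm_compute|by rewrite mem3E; vm_compute|by vm_compute|by rewrite mem3E; vm_compute|by rewrite mem3E; vm_compute
    |by rewrite mem3E; vm_compute|by rewrite mem3E; vm_compute|by apply: ord3P; reflexivity].
have W9 : 0 <= a o1 + a o4 + (-1) * a o2 + (-1) * a o5.
  apply: (@wall_int _ v0 C0 a (mkc (o1, o2, o5)) (mkc (o2, o4, o5)) o2 o5 o1 o4 (-1) (-1) H);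
    [by apply: mkc_in; vm_compute|by apply: mkc_in; vm_compute|by rewrite mem3E; vm_compute|by rewrite mem3E; vm_compute
    |by rewrite mem3E; vm_compute|by rewrite mem3E; vm_compute|by vm_compute|by rewrite mem3E; vm_compute|by rewrite mem3E; vm_compute
    |by rewrite mem3E; vm_compute|by rewrite mem3E; vm_compute|by apply: ord3P; reflexivity].
have W10 : 0 <= a o1 + a o6 + 0 * a o3 + 0 * a o7.
  apply: (@wall_int _ v0 C0 a (mkc (o1, o3, o7)) (mkc (o3, o6, o7)) o3 o7 o1 o6 0 0 H);
    [by apply: mkc_in; vm_compute|by apply: mkc_in; vm_compute|by rewrite mem3E; vm_compute|by rewrite mem3E; vm_compute
    |by rewrite mem3E; vm_compute|by rewrite mem3E; vm_compute|by vm_compute|by rewrite mem3E; vm_compute|by rewrite mem3E; vm_compute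
    |by rewrite mem3E; vm_compute|by rewrite mem3E; vm_compute|by apply: ord3P; reflexivity].
have W11 : 0 <= a o3 + a o4 + 0 * a o2 + (-2) * a o6.
  apply: (@wall_int _ v0 C0 a (mkc (o2, o3, o6)) (mkc (o2, o4, o6)) o2 o6 o3 o4 0 (-2) H);
    [by apply: mkc_in; vm_compute|by apply: mkc_in; vm_compute|by rewrite mem3E; vm_compute|by rewrite mem3E; vm_compute
    |by rewrite mem3E; vm_compute|by rewrite mem3E; vm_compute|by vm_compute|by rewrite mem3E; vm_compute|by rewrite mem3E; vm_compute
    |by rewrite mem3E; vm_compute|by rewrite mem3E; vm_compute|by apply: ord3P; reflexivity].
have W12 : 0 <= a o2 + a o7 + (-1) * a o3 + 2 * a o6.
  apply: (@wall_int _ v0 C0 a (mkc (o2, o3, o6)) (mkc (o3, o6, o7)) o3 o6 o2 o7 (-1) 2 H);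
    [by apply: mkc_in; vm_compute|by apply: mkc_in; vm_compute|by rewrite mem3E; vm_compute|by rewrite mem3E; vm_compute
    |by rewrite mem3E; vm_compute|by rewrite mem3E; vm_compute|by vm_compute|by rewrite mem3E; vm_compute|by rewrite mem3E; vm_compute
    |by rewrite mem3E; vm_compute|by rewrite mem3E; vm_compute|by apply: ord3P; reflexivity].
have W13 : 0 <= a o5 + a o6 + 1 * a o2 + (-1) * a o4.
  apply: (@wall_int _ v0 C0 a (mkc (o2, o4, o5)) (mkc (o2, o4, o6)) o2 o4 o5 o6 1 (-1) H);
    [by apply: mkc_in; vm_compute|by apply: mkc_in; vm_compute|by rewrite mem3E; vm_compute|by rewrite mem3E; vm_compute
    |by rewrite mem3E; vm_compute|by rewrite mem3E; vm_compute|by vm_compute|by rewrite mem3E; vm_compute|by rewrite mem3E; vm_compute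
    |by rewrite mem3E; vm_compute|by rewrite mem3E; vm_compute|by apply: ord3P; reflexivity].
have W14 : 0 <= a o2 + a o7 + 1 * a o4 + 0 * a o5.
  apply: (@wall_int _ v0 C0 a (mkc (o2, o4, o5)) (mkc (o4, o5, o7)) o4 o5 o2 o7 1 0 H);
    [by apply: mkc_in; vm_compute|by apply: mkc_in; vm_compute|by rewrite mem3E; vm_compute|by rewrite mem3E; vm_compute
    |by rewrite mem3E; vm_compute|by rewrite mem3E; vm_compute|by vm_compute|by rewrite mem3E; vm_compute|by rewrite mem3E; vm_compute
    |by rewrite mem3E; vm_compute|by rewrite mem3E; vm_compute|by apply: ord3P; reflexivity].
have W15 : 0 <= a o2 + a o7 + 1 * a o4 + 0 * a o6.
  apply: (@wall_int _ v0 C0 a (mkc (o2, o4, o6)) (mkc (o4, o6, o7)) o4 o6 o2 o7 1 0 H);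
    [by apply: mkc_in; vm_compute|by apply: mkc_in; vm_compute|by rewrite mem3E; vm_compute|by rewrite mem3E; vm_compute
    |by rewrite mem3E; vm_compute|by rewrite mem3E; vm_compute|by vm_compute|by rewrite mem3E; vm_compute|by rewrite mem3E; vm_compute
    |by rewrite mem3E; vm_compute|by rewrite mem3E; vm_compute|by apply: ord3P; reflexivity].
have W16 : 0 <= a o3 + a o4 + (-2) * a o6 + 0 * a o7.
  apply: (@wall_int _ v0 C0 a (mkc (o3, o6, o7)) (mkc (o4, o6, o7)) o6 o7 o3 o4 (-2) 0 H);
    [by apply: mkc_in; vm_compute|by apply: mkc_in; vm_compute|by rewrite mem3E; vm_compute|by rewrite mem3E; vm_compute
    |by rewrite mem3E; vm_compute|by rewrite mem3E; vm_compute|by vm_compute|by rewrite mem3E; vm_compute|by rewrite mem3E; vm_compute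
    |by rewrite mem3E; vm_compute|by rewrite mem3E; vm_compute|by apply: ord3P; reflexivity].
have W17 : 0 <= a o5 + a o6 + (-2) * a o4 + (-1) * a o7.
  apply: (@wall_int _ v0 C0 a (mkc (o4, o5, o7)) (mkc (o4, o6, o7)) o4 o7 o5 o6 (-2) (-1) H);
    [by apply: mkc_in; vm_compute|by apply: mkc_in; vm_compute|by rewrite mem3E; vm_compute|by rewrite mem3E; vm_compute
    |by rewrite mem3E; vm_compute|by rewrite mem3E; vm_compute|by vm_compute|by rewrite mem3E; vm_compute|by rewrite mem3E; vm_compute
    |by rewrite mem3E; vm_compute|by rewrite mem3E; vm_compute|by apply: ord3P; reflexivity].
pose m := ((1 * a o0 + (-2) * a o5), (1 * a o0 + (-1) * a o5), ((-1) * a o1 + 1 * a o5)).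
have T0 : a o0 = \sum_(r < 3) mk3 m r * v0 o0 r.
  by rewrite sum3 !v0E /mk3 /m /i0 /i1 /i2 /=; lia.
have T1 : a o1 = \sum_(r < 3) mk3 m r * v0 o1 r.
  by rewrite sum3 !v0E /mk3 /m /i0 /i1 /i2 /=; lia.
have T2 : a o2 = \sum_(r < 3) mk3 m r * v0 o2 r.
  by rewrite sum3 !v0E /mk3 /m /i0 /i1 /i2 /=; lia.
have T3 : a o3 = \sum_(r < 3) mk3 m r * v0 o3 r.
  by rewrite sum3 !v0E /mk3 /m /i0 /i1 /i2 /=; lia.
have T4 : a o4 = \sum_(r < 3) mk3 m r * v0 o4 r.
  by rewrite sum3 !v0E /mk3 /m /i0 /i1 /i2 /=; lia.
have T5 : a o5 = \sum_(r < 3) mk3 m r * v0 o5 r.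
  by rewrite sum3 !v0E /mk3 /m /i0 /i1 /i2 /=; lia.
have T6 : a o6 = \sum_(r < 3) mk3 m r * v0 o6 r.
  by rewrite sum3 !v0E /mk3 /m /i0 /i1 /i2 /=; lia.
have T7 : a o7 = \sum_(r < 3) mk3 m r * v0 o7 r.
  by rewrite sum3 !v0E /mk3 /m /i0 /i1 /i2 /=; lia.
exists (mk3 m) => t.
case: t => [[|[|[|[|[|[|[|[|mm]]]]]]]] Ht] //; rewrite (bool_irrelevance Ht isT);
  [exact: T0|exact: T1|exact: T2|exact: T3|exact: T4|exact: T5|exact: T6|exact: T7].
Qed.

Lemma base0 : Inv 5 v0 C0.
Proof.
split.
- split; [exact: inj0|exact: smooth0|exact: rays0P|exact: fan0|exact: complete0].
- rewrite /picard_number (@rank3 _ v0 o0 o1 o5) //; vm_compute.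
- exact: nef0.
exists o0, o1, o5, o7, ((-2 : int)%:~R), ((1 : int)%:~R).
split; [split|split].
- by apply: (@mkc_in (o0, o1, o5)); vm_compute.
- by apply: (@mkc_in (o0, o1, o7)); vm_compute.
- by vm_compute.
- by vm_compute.
- by vm_compute.
- by left; vm_compute.
- apply/relE => s; rewrite /vq -!intrM -!intrD; move: s; apply: ord3P; reflexivity.
Qed.


Lemma all_Inv (d : nat) : exists (N : nat) (v : 'I_N -> 'I_3 -> int) (C : {set {set 'I_N}}),
  Inv (5 + d) v C.
Proof.
elim: d => [|d [N [v [C [Hf Hp Ht [i [j [k [l [al [be [[H1 H2 H3 H4 H5] [H6 H7]]]]]]]]]]]]].
  by exists 8%N, v0, C0; exact: base0.
exists N.+1, (v' v i j k), (C' C i j k); rewrite addnS.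
exact: (step_Inv Hf H1 H2 H3 H4 H5 H6 H7 Hp Ht).
Qed.

Theorem mainTheorem5 :
  forall n : nat, (5 <= n)%N ->
  exists (N : nat) (v : 'I_N -> 'I_3 -> int) (C : {set {set 'I_N}}),
    smooth_complete_fan v C /\ picard_number v = n /\
    (forall a : 'I_N -> int, nef v C a -> trivial_bundle v a).
Proof.
move=> n hn.
have [N [v [C [Hf Hp Ht _]]]] := all_Inv (n - 5).
exists N, v, C; split => //; split => //.
by rewrite Hp subnKC.
Qed.
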